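(* Let a chemical reaction network satisfying (H1) and (H2) consist of exactly $2N$ connected components which, for $i=1,\dots,N$, come in pairs \[ Y_i+S_{i,0}\rightleftarrows U_{i,1}\to\cdots\rightleftarrows U_{i,L_i}\to Y_i+S_{i,L_i},\qquad \widetilde Y_i+S_{i,L_i}\rightleftarrows V_{i,L_i}\to\widetilde Y_i+S_{i,L_i-1}\rightleftarrows\cdots\rightleftarrows V_{i,1}\to\widetilde Y_i+S_{i,0}, \] with rate constants $a_{i,j},b_{i,j},c_{i,j},\tilde a_{i,j},\tilde b_{i,j},\tilde c_{i,j}$ as in the context. Then the associated system is identifiable (all rate constants are identifiable) from $s_{1,L_1},\dots,s_{N,L_N}$, and for each $i$ it suffices to use $s_{i,L_i}^{(\ell)}$ with $1\le\ell\le\max\{2,2L_i-1\}$.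
   Context: Species are capital letters, concentrations lower-case letters. A chemical reaction network is a finite directed graph on complexes with reactions $y\to y'$ carrying rate constants $k_{yy'}>0$ (vector $\mathbf{k}$); mass-action system $\dot{\mathbf{x}}=\sum k_{yy'}\mathbf{x}^y(y'-y)$. Total derivative: $\dot\varphi=\sum_i\frac{\partial\varphi}{\partial x_i}\dot x_i$ with $\dot x_i$ replaced by the right-hand side; $\varphi^{(\ell)}$ the $\ell$-th iterate. A map $\psi$ of $\mathbf{k}$ is identifiable from $x_{i_1},\dots,x_{i_t}$ using orders $1\le\ell\le D$ if, for positive $\mathbf{k}^*,\mathbf{k}^{**}$, equality of $x_{i_j}^{(\ell)}(\mathbf{x},\mathbf{k}^* )$ and $x_{i_j}^{(\ell)}(\mathbf{x},\mathbf{k}^{**})$ as polynomials in $\mathbf{x}$ for all $1\le \ell\le D$ and all $j$ implies $\psi(\mathbf{k}^* )=\psi(\mathbf{k}^{**})$; the system is identifiable if this holds for $\psi=$ identity. (H1) Every connected component has the form $Y+S_0\rightleftarrows U_1\to\cdots\rightleftarrows U_L\to Y+S_L$ (reactions $Y+S_{j-1}\to U_j$, $U_j\to Y+S_{j-1}$, $U_j\to Y+S_j$), unique enzyme $Y$; intermediates distinct throughout the network; the non-intermediates of a component are pairwise distinct but may appear in other components; each complex in a unique component. $\mathscr{S}_U$ = substrates/products of the component of intermediate $U$. (H2) A partition $\mathscr{S}^{(0)}\sqcup\cdots\sqcup\mathscr{S}^{(M)}$ ($M\ge2$, nonempty parts, $\mathscr{S}^{(0)}$ the intermediates) such that for each intermediate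 $U$ with enzyme $Y$ there is $\alpha\ge1$ with $\mathscr{S}_U\subseteq\mathscr{S}^{(\alpha)}$, $Y\notin\mathscr{S}^{(\alpha)}$. Rates: $Y_i+S_{i,j-1}\to U_{i,j}$: $a_{i,j}$; $U_{i,j}\to Y_i+S_{i,j-1}$: $b_{i,j}$; $U_{i,j}\to Y_i+S_{i,j}$: $c_{i,j}$; $\widetilde Y_i+S_{i,j}\to V_{i,j}$: $\tilde a_{i,j}$; $V_{i,j}\to\widetilde Y_i+S_{i,j}$: $\tilde b_{i,j}$; $V_{i,j}\to\widetilde Y_i+S_{i,j-1}$: $\tilde c_{i,j}$. *)

(* Defs.v *)
From HB Require Import structures.
From mathcomp Require Import all_boot all_order all_algebra.
Set Implicit Arguments. Unset Strict Implicit. Unset Printing Implicit Defensive.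
Import Order.TTheory GRing.Theory Num.Theory.
Local Open Scope ring_scope.

(* Multivariate polynomials in the concentrations x_t (t : T, T a finite
   type of species), represented by their coefficient function on
   monomials (exponent vectors T -> nat). *)
Definition mpoly (T : Type) (R : Type) := (T -> nat) -> R.

Section Poly.
Variables (T : finType) (R : realFieldType).

Definition pvar (s : T) : mpoly T R :=
  fun m => if [forall t, m t == nat_of_bool (t == s)] then 1 else 0.

Definition pderiv (s : T) (p : mpoly T R) : mpoly T R :=
  fun m => (m s).+1%:R * p (fun t => (m t + nat_of_bool (t == s))%N).

Definition pmulmono (y : T -> nat) (p : mpoly T R) : mpoly T R :=
  fun m => if [forall t, (y t <= m t)%N] then p (fun t => (m t - y t)%N) else 0.

(* complexes as stoichiometric vectors *)
Definition cplx1 (x : T) : T -> nat := fun t => nat_of_bool (t == x).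
Definition cplx2 (x y : T) : T -> nat :=
  fun t => (nat_of_bool (t == x) + nat_of_bool (t == y))%N.

(* a reaction: (rate constant, reactant complex y, product complex y') *)
Definition reaction := (R * (T -> nat) * (T -> nat))%type.

(* total (Lie) derivative along the mass-action vector field
   dx/dt = sum_r k_r x^{y_r} (y'_r - y_r):
   phi' = sum_s (d phi / d x_s) * xdot_s *)
Definition totder (rx : seq reaction) (p : mpoly T R) : mpoly T R :=
  fun m => \sum_(r <- rx) \sum_(s : T)
     r.1.1 * ((r.2 s)%:R - (r.1.2 s)%:R) * pmulmono r.1.2 (pderiv s p) m.

Definition xder (rx : seq reaction) (l : nat) (s : T) : mpoly T R :=
  iter l (totder rx) (pvar s).
End Poly.

(* rate constants a,b,c (forward chains) and a~,b~,c~ (backward chains),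
   indexed by i : 'I_N and j (meaningful for 1 <= j <= L i) *)
Record rates (N : nat) (R : Type) := Rates {
  ka : 'I_N -> nat -> R; kb : 'I_N -> nat -> R; kc : 'I_N -> nat -> R;
  kat : 'I_N -> nat -> R; kbt : 'I_N -> nat -> R; kct : 'I_N -> nat -> R }.

Definition network (T : finType) (R : realFieldType) (N : nat)
  (L : 'I_N -> nat) (Y Yt : 'I_N -> T) (S U V : 'I_N -> nat -> T)
  (k : rates N R) : seq (reaction T R) :=
  flatten [seq flatten [seq
    [:: (ka k i j, cplx2 (Y i) (S i j.-1), cplx1 (U i j));
        (kb k i j, cplx1 (U i j), cplx2 (Y i) (S i j.-1));
        (kc k i j, cplx1 (U i j), cplx2 (Y i) (S i j));
        (kat k i j, cplx2 (Yt i) (S i j), cplx1 (V i j));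
        (kbt k i j, cplx1 (V i j), cplx2 (Yt i) (S i j));
        (kct k i j, cplx1 (V i j), cplx2 (Yt i) (S i j.-1))]
    | j <- iota 1 (L i)] | i <- enum 'I_N].

Definition pos_rates (R : realFieldType) (N : nat) (L : 'I_N -> nat)
  (k : rates N R) : Prop :=
  forall i j, (1 <= j <= L i)%N ->
    [/\ 0 < ka k i j, 0 < kb k i j & 0 < kc k i j] /\
    [/\ 0 < kat k i j, 0 < kbt k i j & 0 < kct k i j].

Definition eq_rates (R : realFieldType) (N : nat) (L : 'I_N -> nat)
  (k1 k2 : rates N R) : Prop :=
  forall i j, (1 <= j <= L i)%N ->
    [/\ ka k1 i j = ka k2 i j, kb k1 i j = kb k2 i j & kc k1 i j = kc k2 i j] /\
    [/\ kat k1 i j = kat k2 i j, kbt k1 i j = kbt k2 i j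
      & kct k1 i j = kct k2 i j].

Definition is_inter (T : finType) (N : nat) (L : 'I_N -> nat)
  (U V : 'I_N -> nat -> T) (t : T) : Prop :=
  exists i j, (1 <= j <= L i)%N /\ (t = U i j \/ t = V i j).

Definition is_nonint (T : finType) (N : nat) (L : 'I_N -> nat)
  (Y Yt : 'I_N -> T) (S : 'I_N -> nat -> T) (t : T) : Prop :=
  exists i, t = Y i \/ t = Yt i \/ exists j, (j <= L i)%N /\ t = S i j.

(* enzyme of component (i, b): b = false forward chain, b = true backward *)
Definition enz (T : Type) (N : nat) (Y Yt : 'I_N -> T) (i : 'I_N) (b : bool) :=
  if b then Yt i else Y i.

Definition H1 (T : finType) (N : nat) (L : 'I_N -> nat)
  (Y Yt : 'I_N -> T) (S U V : 'I_N -> nat -> T) : Prop :=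
  [/\
      forall i, (0 < L i)%N,
      (forall i j i' j', (1 <= j <= L i)%N -> (1 <= j' <= L i')%N ->
         [/\ U i j = U i' j' -> i = i' /\ j = j',
             V i j = V i' j' -> i = i' /\ j = j' & U i j <> V i' j']),
      (forall t, is_inter L U V t -> ~ is_nonint L Y Yt S t) &
    [/\
      (forall i j j', (j <= L i)%N -> (j' <= L i)%N -> S i j = S i j' -> j = j'),
      (forall i j, (j <= L i)%N -> Y i <> S i j /\ Yt i <> S i j) &
      (forall i b i' b' j j', (j <= L i)%N -> (j' <= L i')%N -> (i, b) <> (i', b') ->
         cplx2 (enz Y Yt i b) (S i j) <> cplx2 (enz Y Yt i' b') (S i' j'))]].

(* (H2) for this network; the partition is given by part : T -> 'I_M.+1,
   part 0 being the set of intermediates *)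
Definition H2 (T : finType) (N : nat) (L : 'I_N -> nat)
  (Y Yt : 'I_N -> T) (S U V : 'I_N -> nat -> T) : Prop :=
  exists (M : nat) (part : T -> 'I_M.+1),
  [/\ (2 <= M)%N,
      (forall a : 'I_M.+1, exists t, part t = a),
      (forall t, val (part t) = 0%N <-> is_inter L U V t),
      (forall i j, (1 <= j <= L i)%N -> exists a : 'I_M.+1,
         [/\ (0 < val a)%N, (forall j', (j' <= L i)%N -> part (S i j') = a)
           & part (Y i) <> a]) &
      (forall i j, (1 <= j <= L i)%N -> exists a : 'I_M.+1,
         [/\ (0 < val a)%N, (forall j', (j' <= L i)%N -> part (S i j') = a)
           & part (Yt i) <> a])].

(* Main.v *)
Require Import Defs.
From HB Require Import structures.
From mathcomp Require Import all_boot all_order all_algebra.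
Import Order.TTheory GRing.Theory Num.Theory.
Local Open Scope ring_scope.
From mathcomp Require Import ring lra zify.
From Stdlib Require Import FunctionalExtensionality.
Set Implicit Arguments. Unset Strict Implicit. Unset Printing Implicit Defensive.

Section Gen.
Variables (T : finType) (R : realFieldType).

Definition mono (xs : seq T) : T -> nat := fun t => count_mem t xs.
Definition rterm (r : reaction T R) (p : mpoly T R) (m : T -> nat) : R :=
  \sum_(s : T) r.1.1 * ((r.2 s)%:R - (r.1.2 s)%:R) * pmulmono r.1.2 (pderiv s p) m.
Definition lem (y m : T -> nat) := [forall t, (y t <= m t)%N].
Definition shift (m y : T -> nat) (s : T) : T -> nat :=
  fun t => (m t - y t + nat_of_bool (t == s))%N.

Lemma totderE (rx : seq (reaction T R)) p m : totder rx p m = \sum_(r <- rx) rterm r p m.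
Proof. by []. Qed.

Lemma xderS (rx : seq (reaction T R)) l s : xder rx l.+1 s = totder rx (xder rx l s).
Proof. by []. Qed.

Lemma rterm_nle r p m : ~~ lem r.1.2 m -> rterm r p m = 0.
Proof.
rewrite /lem => h; rewrite /rterm; apply: big1 => s _.
by rewrite /pmulmono (negbTE h) mulr0.
Qed.

Lemma sum_mono (xs : seq T) (X : T -> R) :
  \sum_(s : T) (mono xs s)%:R * X s = \sum_(x <- xs) X x.
Proof.
elim: xs => [|x xs IH]; first by rewrite big_nil; apply: big1 => s _; rewrite mul0r.
rewrite big_cons -IH /mono /=.
under eq_bigr do rewrite natrD mulrDl.
rewrite big_split /=; congr (_ + _).
rewrite (bigD1 x) //= eqxx mul1r big1 ?addr0 // => s /negbTE.
by rewrite eq_sym => ->; rewrite mul0r.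
Qed.

Lemma rterm_le r p m ys ys' : r.1.2 = mono ys -> r.2 = mono ys' -> lem r.1.2 m ->
  rterm r p m = r.1.1 * (\sum_(x <- ys')
       ((m x - r.1.2 x).+1%:R * p (shift m r.1.2 x))
     - \sum_(x <- ys) ((m x - r.1.2 x).+1%:R * p (shift m r.1.2 x))).
Proof.
move=> hy hy'; rewrite /lem => hle; rewrite /rterm /pmulmono hle.
rewrite -(sum_mono ys') -(sum_mono ys) -sumrB mulr_sumr; apply: eq_bigr => s _.
by rewrite /pderiv -hy -hy' -mulrBl !mulrA.
Qed.

Variable phi : T -> int.
Definition Phi (m : T -> nat) : int := \sum_(t : T) (m t)%:Z * phi t.

Lemma Phi_mono xs : Phi (mono xs) = \sum_(x <- xs) phi x.
Proof.
elim: xs => [|x xs IH]; first by rewrite big_nil; apply: big1 => s _; rewrite mul0r.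
rewrite big_cons -IH /Phi /mono /=.
under eq_bigr do rewrite PoszD mulrDl.
rewrite big_split /=; congr (_ + _).
rewrite (bigD1 x) //= eqxx mul1r big1 ?addr0 // => s /negbTE.
by rewrite eq_sym => ->; rewrite mul0r.
Qed.

Lemma Phi_shift m y s : lem y m -> Phi (shift m y s) = Phi m - Phi y + phi s.
Proof.
move=> /forallP hle; rewrite /Phi /shift.
have -> : \sum_(t : T) ((m t - y t + nat_of_bool (t == s))%N)%:Z * phi t =
   \sum_(t : T) ((m t)%:Z * phi t - (y t)%:Z * phi t + (nat_of_bool (t == s))%:Z * phi t).
  apply: eq_bigr => t _; rewrite PoszD -subzn ?hle //.
  by rewrite mulrDl mulrBl.
rewrite big_split sumrB /=; congr (_ + _).
rewrite (bigD1 s) //= eqxx mul1r big1 ?addr0 // => t /negbTE ->; by rewrite mul0r.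
Qed.

Lemma sum_nz_In (A : Type) (rx : seq A) (F : A -> R) :
  \sum_(r <- rx) F r != 0 -> exists2 r, List.In r rx & F r != 0.
Proof.
elim: rx => [|r rx IH]; first by rewrite big_nil eqxx.
rewrite big_cons; case: (eqVneq (F r) 0) => [-> | h _]; last by exists r; [left|].
by rewrite add0r => /IH [r' h1 h2]; exists r'; [right|].
Qed.

Definition pvalid (rx : seq (reaction T R)) :=
  forall r, List.In r rx -> forall s, r.2 s != r.1.2 s -> phi s <= Phi r.1.2 + 1.

Lemma pot (rx : seq (reaction T R)) s0 : pvalid rx -> forall l m, xder rx l s0 m != 0 -> phi s0 <= Phi m + l%:Z.
Proof.
move=> hv; elim=> [|l IH] m.
  rewrite /xder /= /pvar; case: forallP => [h _|_]; last by rewrite eqxx.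
  have -> : m = mono [:: s0].
    apply: functional_extensionality => t; rewrite /mono /= addn0 eq_sym; exact/eqP/h.
  by rewrite Phi_mono big_seq1 addr0.
change (totder rx (xder rx l s0) m != 0 -> phi s0 <= Phi m + l.+1%:Z).
rewrite totderE => hne.
have [r rin hr] := sum_nz_In hne.
have hle : lem r.1.2 m by apply: contraNT hr => /rterm_nle ->.
have [s _ hs] : exists2 s, s \in T & r.1.1 * ((r.2 s)%:R - (r.1.2 s)%:R) *
    pmulmono r.1.2 (pderiv s (xder rx l s0)) m != 0.
  apply/exists_inP; apply: contraNT hr => /exists_inPn h.
  by rewrite /rterm big1 // => x _; apply/eqP/negPn/h.
move: (hle) hs; rewrite /lem /pmulmono => hle'; rewrite hle' /pderiv.
rewrite !mulf_eq0 !negb_or => /andP[/andP[_ hd] /andP[_ hp]].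
have hd' : r.2 s != r.1.2 s by apply: contra hd => /eqP ->; rewrite subrr.
have := IH _ hp; have := hv r rin s hd'.
rewrite -/(shift m r.1.2 s) Phi_shift // => h1 h2.
rewrite -addn1 PoszD; lia.
Qed.

Lemma pot0 (rx : seq (reaction T R)) s0 l m : pvalid rx -> Phi m + l%:Z < phi s0 -> xder rx l s0 m = 0.
Proof.
move=> hv hlt; apply/eqP; apply: contraTT hlt => /(pot hv) h.
by rewrite -leNgt.
Qed.


Lemma Xz (rx : seq (reaction T R)) s0 l m y s : pvalid rx -> lem y m ->
  Phi m - Phi y + phi s + l%:Z < phi s0 ->
  (m s - y s).+1%:R * xder rx l s0 (shift m y s) = 0.
Proof. by move=> hv hle h; rewrite (pot0 hv) ?mulr0 // Phi_shift. Qed.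

End Gen.

Lemma sum_nseq (T : Type) (F : T -> int) n x : \sum_(y <- nseq n x) F y = F x *+ n.
Proof. by elim: n => [|n IH]; rewrite ?big_nil ?big_cons ?IH ?mulrS. Qed.

Lemma shift_mono (T : finType) (xs ys zs : seq T) s : perm_eq xs (ys ++ zs) ->
  shift (mono xs) (mono ys) s = mono (s :: zs).
Proof.
move=> /permP h; apply: functional_extensionality => t.
rewrite /shift /mono /= (h (pred1 t)) count_cat addKn addnC eq_sym.
by [].
Qed.

Lemma mult_mono (T : finType) (xs ys zs : seq T) s : perm_eq xs (ys ++ zs) ->
  (mono xs s - mono ys s)%N = count_mem s zs.
Proof. by move=> /permP h; rewrite /mono (h (pred1 s)) count_cat addKn. Qed.

Lemma Xv (T : finType) (R : realFieldType) (xs ys zs : seq T) s (p : mpoly T R) :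
  perm_eq xs (ys ++ zs) ->
  (mono xs s - mono ys s).+1%:R * p (shift (mono xs) (mono ys) s) =
  (count_mem s zs).+1%:R * p (mono (s :: zs)).
Proof. by move=> h; rewrite (shift_mono _ h) (mult_mono _ h). Qed.

Lemma cplx1E (T : finType) (x : T) : cplx1 x = mono [:: x].
Proof. apply: functional_extensionality => t; by rewrite /cplx1 /mono /= addn0 eq_sym. Qed.
Lemma cplx2E (T : finType) (x y : T) : cplx2 x y = mono [:: x; y].
Proof. apply: functional_extensionality => t; by rewrite /cplx2 /mono /= addn0 eq_sym (eq_sym y). Qed.

Lemma rt_bind (T : finType) (R : realFieldType) (kk : R) (E P W : T) p m :
  lem (mono [:: E; P]) m ->
  rterm (kk, cplx2 E P, cplx1 W) p m =
  kk * ((m W - mono [:: E; P] W).+1%:R * p (shift m (mono [:: E; P]) W)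
     - ((m E - mono [:: E; P] E).+1%:R * p (shift m (mono [:: E; P]) E)
      + (m P - mono [:: E; P] P).+1%:R * p (shift m (mono [:: E; P]) P))).
Proof.
move=> h; rewrite (@rterm_le _ _ _ _ _ [:: E; P] [:: W]) /= ?cplx2E ?cplx1E //.
by rewrite !big_cons !big_nil !addr0.
Qed.

Lemma rt_unb (T : finType) (R : realFieldType) (kk : R) (E P W : T) p m :
  lem (mono [:: W]) m ->
  rterm (kk, cplx1 W, cplx2 E P) p m =
  kk * (((m E - mono [:: W] E).+1%:R * p (shift m (mono [:: W]) E)
      + (m P - mono [:: W] P).+1%:R * p (shift m (mono [:: W]) P))
      - (m W - mono [:: W] W).+1%:R * p (shift m (mono [:: W]) W)).
Proof.
move=> h; rewrite (@rterm_le _ _ _ _ _ [:: W] [:: E; P]) /= ?cplx2E ?cplx1E //.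
by rewrite !big_cons !big_nil !addr0.
Qed.

Lemma mono_perm (T : finType) (xs ys : seq T) : perm_eq xs ys -> mono xs = mono ys.
Proof. by move=> /permP h; apply: functional_extensionality => t; rewrite /mono h. Qed.

Lemma cplx2_inj (T : finType) (a b c d : T) : a != b -> cplx2 a b = cplx2 c d ->
  (a = c /\ b = d) \/ (a = d /\ b = c).
Proof.
move=> hab h.
have ha := congr1 (fun f => f a) h; have hb := congr1 (fun f => f b) h.
move: ha hb; rewrite /cplx2 /= eqxx (negbTE hab) (eq_sym b a) (negbTE hab) eqxx.
case: (eqVneq a c) => ac; case: (eqVneq a d) => ad;
case: (eqVneq b c) => bc; case: (eqVneq b d) => bd //=; subst;
rewrite ?eqxx ?(negbTE hab) //=; try by [left|right].
all: by move: hab; rewrite ?eqxx.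
Qed.

Lemma In_flatten (A : Type) (x : A) ss : List.In x (flatten ss) -> exists2 s, List.In s ss & List.In x s.
Proof.
elim: ss => [|s ss IH] //= h.
case: (List.in_app_or _ _ _ h) => [h'|/IH [s' h1 h2]]; first by exists s; [left|].
by exists s'; [right|].
Qed.

Lemma In_mem (A : eqType) (x : A) s : List.In x s -> x \in s.
Proof. by elim: s => [|y s IH] //= [->|/IH h]; rewrite inE ?eqxx ?h ?orbT. Qed.

Lemma mono_ne (T : finType) (ys ys' : seq T) (s : T) : mono ys' s != mono ys s -> s \in ys' ++ ys.
Proof.
apply: contraR; rewrite mem_cat negb_or => /andP [h1 h2].
by rewrite /mono !(count_memPn _) ?eqxx.
Qed.


Lemma sum_In0 (R : realFieldType) (A : Type) (l : seq A) (F : A -> R) :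
  (forall r, List.In r l -> F r = 0) -> \sum_(r <- l) F r = 0.
Proof.
elim: l => [|a l IH] h; first by rewrite big_nil.
by rewrite big_cons h ?IH ?add0r //; [move=> r hr; apply: h; right|left].
Qed.

Section Net.
Variables (R : realFieldType) (T : finType) (N : nat) (L : 'I_N -> nat)
  (Y Yt : 'I_N -> T) (S U V : 'I_N -> nat -> T).
Hypothesis hH1 : H1 L Y Yt S U V.
Hypothesis hH2 : H2 L Y Yt S U V.

Definition six (k : rates N R) i j : seq (reaction T R) :=
    [:: (ka k i j, cplx2 (Y i) (S i j.-1), cplx1 (U i j));
        (kb k i j, cplx1 (U i j), cplx2 (Y i) (S i j.-1));
        (kc k i j, cplx1 (U i j), cplx2 (Y i) (S i j));
        (kat k i j, cplx2 (Yt i) (S i j), cplx1 (V i j));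
        (kbt k i j, cplx1 (V i j), cplx2 (Yt i) (S i j));
        (kct k i j, cplx1 (V i j), cplx2 (Yt i) (S i j.-1))].

Lemma network_sum k (F : reaction T R -> R) :
  \sum_(r <- network L Y Yt S U V k) F r =
  \sum_(i : 'I_N) \sum_(j <- iota 1 (L i)) \sum_(r <- six k i j) F r.
Proof.
rewrite /network big_flatten big_map big_enum /=; apply: eq_bigr => i _.
by rewrite big_flatten big_map.
Qed.

Lemma network_In k r : List.In r (network L Y Yt S U V k) ->
  exists i j, (1 <= j <= L i)%N /\ List.In r (six k i j).
Proof.
move=> h; have [s hs hr0] := In_flatten h.
have [i [ei _]] := proj1 (List.in_map_iff _ _ _) hs; subst s.
have [s' hs' hr] := In_flatten hr0.
have [j [ej hj]] := proj1 (List.in_map_iff _ _ _) hs'; subst s'.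
exists i, j; split => //; move: (In_mem hj); rewrite mem_iota; lia.
Qed.

Lemma hL i : (0 < L i)%N. Proof. by case: hH1. Qed.

Lemma inter_nonint t : is_inter L U V t -> is_nonint L Y Yt S t -> False.
Proof. case: hH1 => _ _ h _; exact: h. Qed.

Lemma U_inj i j i' j' : (1 <= j <= L i)%N -> (1 <= j' <= L i')%N -> U i j = U i' j' -> i = i' /\ j = j'.
Proof. case: hH1 => _ h _ _ hj hj'; by case: (h _ _ _ _ hj hj'). Qed.
Lemma V_inj i j i' j' : (1 <= j <= L i)%N -> (1 <= j' <= L i')%N -> V i j = V i' j' -> i = i' /\ j = j'.
Proof. case: hH1 => _ h _ _ hj hj'; by case: (h _ _ _ _ hj hj'). Qed.
Lemma U_V i j i' j' : (1 <= j <= L i)%N -> (1 <= j' <= L i')%N -> U i j <> V i' j'.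
Proof. case: hH1 => _ h _ _ hj hj'; by case: (h _ _ _ _ hj hj'). Qed.

Lemma S_inj i j j' : (j <= L i)%N -> (j' <= L i)%N -> S i j = S i j' -> j = j'.
Proof. by case: hH1 => _ _ _ [h _ _]; apply: h. Qed.
Lemma Y_S i j : (j <= L i)%N -> Y i <> S i j.
Proof. by case: hH1 => _ _ _ [_ h _] hj; case: (h _ _ hj). Qed.
Lemma Yt_S i j : (j <= L i)%N -> Yt i <> S i j.
Proof. by case: hH1 => _ _ _ [_ h _] hj; case: (h _ _ hj). Qed.
Lemma uniq_c i b i' b' j j' : (j <= L i)%N -> (j' <= L i')%N -> (i, b) <> (i', b') ->
  cplx2 (enz Y Yt i b) (S i j) <> cplx2 (enz Y Yt i' b') (S i' j').
Proof. by case: hH1 => _ _ _ [_ _ h]; apply: h. Qed.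

Lemma enz_S i b j : (j <= L i)%N -> enz Y Yt i b != S i j.
Proof. by move=> hj; case: b => /=; apply/eqP; [apply: Yt_S|apply: Y_S]. Qed.

Lemma uniq_c2 i b i' b' j j' : (j <= L i)%N -> (j' <= L i')%N ->
  cplx2 (enz Y Yt i b) (S i j) = cplx2 (enz Y Yt i' b') (S i' j') -> [/\ i = i', b = b' & j = j'].
Proof.
move=> hj hj' h.
case: (eqVneq (i, b) (i', b')) => [e|hne]; last by case: (uniq_c hj hj' (elimN eqP hne)).
case: e h hj' => <- <- h hj'.
split => //; case: (cplx2_inj (enz_S b hj) h) => [[_ h2]|[h1 h2]]; first exact: S_inj hj hj' h2.
by case: (elimN eqP (enz_S b hj)); rewrite h2.
Qed.

Lemma cplx2C (a b : T) : cplx2 a b = cplx2 b a.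
Proof. by apply: functional_extensionality => t; rewrite /cplx2 addnC. Qed.

Lemma U_int i j : (1 <= j <= L i)%N -> is_inter L U V (U i j).
Proof. by move=> hj; exists i, j; split => //; left. Qed.
Lemma V_int i j : (1 <= j <= L i)%N -> is_inter L U V (V i j).
Proof. by move=> hj; exists i, j; split => //; right. Qed.
Lemma Y_ni i : is_nonint L Y Yt S (Y i). Proof. by exists i; left. Qed.
Lemma Yt_ni i : is_nonint L Y Yt S (Yt i). Proof. by exists i; right; left. Qed.
Lemma S_ni i x : (x <= L i)%N -> is_nonint L Y Yt S (S i x). Proof. by exists i; right; right; exists x. Qed.
Lemma enz_ni i b : is_nonint L Y Yt S (enz Y Yt i b). Proof. case: b; [exact: Yt_ni|exact: Y_ni]. Qed.

Lemma int_ne t t' : is_inter L U V t -> is_nonint L Y Yt S t' -> t != t'.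
Proof. by move=> h h'; apply/eqP => e; subst; exact: (inter_nonint h h'). Qed.

Lemma Y_Yt i : Y i != Yt i.
Proof.
apply/eqP => e; have h0 : (0 <= L i)%N by [].
by apply: (uniq_c (i:=i) (b:=false) (i':=i) (b':=true) h0 h0) => //=; rewrite e.
Qed.

Lemma parts : exists part : T -> nat,
  [/\ (forall i x y, (x <= L i)%N -> (y <= L i)%N -> part (S i x) = part (S i y)),
      (forall i x, (x <= L i)%N -> part (Y i) <> part (S i x)) &
      (forall i x, (x <= L i)%N -> part (Yt i) <> part (S i x))].
Proof.
case: hH2 => M [part [_ _ _ hF hB]].
exists (fun t => val (part t)); split.
- move=> i x y hx hy; have h1 : (1 <= 1 <= L i)%N by rewrite leqnn hL.
  by case: (hF _ _ h1) => a [_ h _]; rewrite (h _ hx) (h _ hy).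
- move=> i x hx; have h1 : (1 <= 1 <= L i)%N by rewrite leqnn hL.
  case: (hF _ _ h1) => a [_ h h']; rewrite (h _ hx) => e; apply: h'; exact: val_inj.
- move=> i x hx; have h1 : (1 <= 1 <= L i)%N by rewrite leqnn hL.
  case: (hB _ _ h1) => a [_ h h']; rewrite (h _ hx) => e; apply: h'; exact: val_inj.
Qed.

Lemma part_enz (part : T -> nat) i b x :
  (forall i x, (x <= L i)%N -> part (Y i) <> part (S i x)) ->
  (forall i x, (x <= L i)%N -> part (Yt i) <> part (S i x)) ->
  (x <= L i)%N -> part (enz Y Yt i b) <> part (S i x).
Proof. by case: b => /= h2 h3 hx; [apply: h3|apply: h2]. Qed.

Definition cni i t := t = Y i \/ t = Yt i \/ exists2 y, (y <= L i)%N & t = S i y.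

Lemma c2_chain i i' b' x : (x <= L i')%N ->
  cni i (enz Y Yt i' b') -> cni i (S i' x) ->
  ~ (enz Y Yt i' b' = Y i /\ S i' x = Yt i) -> ~ (enz Y Yt i' b' = Yt i /\ S i' x = Y i) ->
  i' = i.
Proof.
move=> hx hE hP n1 n2.
have [part [hp1 hp2 hp3]] := parts.
have hne := enz_S b' hx.
case: hP => [eP|[eP|[y hy eP]]].
- case: hE => [eE|[eE|[z hz eE]]].
  + by move: hne; rewrite eE eP eqxx.
  + by case: n2.
  + have h : cplx2 (enz Y Yt i' b') (S i' x) = cplx2 (enz Y Yt i false) (S i z).
      by rewrite eE eP cplx2C.
    by case: (uniq_c2 hx hz h) => ->.
- case: hE => [eE|[eE|[z hz eE]]].
  + by case: n1.
  + by move: hne; rewrite eE eP eqxx.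
  + have h : cplx2 (enz Y Yt i' b') (S i' x) = cplx2 (enz Y Yt i true) (S i z).
      by rewrite eE eP cplx2C.
    by case: (uniq_c2 hx hz h) => ->.
- case: hE => [eE|[eE|[z hz eE]]].
  + have h : cplx2 (enz Y Yt i' b') (S i' x) = cplx2 (enz Y Yt i false) (S i y) by rewrite eE eP.
    by case: (uniq_c2 hx hy h) => ->.
  + have h : cplx2 (enz Y Yt i' b') (S i' x) = cplx2 (enz Y Yt i true) (S i y) by rewrite eE eP.
    by case: (uniq_c2 hx hy h) => ->.
  + exfalso; apply: (part_enz hp2 hp3 (b:=b') hx).
    by rewrite eE eP (hp1 _ _ _ hz hy).
Qed.

Lemma count_gt0_mem (x : T) xs : (0 < count_mem x xs)%N = (x \in xs).
Proof. by rewrite -has_count has_pred1. Qed.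

Lemma lem1 (w : T) (xs : seq T) : lem (cplx1 w) (mono xs) = (w \in xs).
Proof.
apply/forallP/idP => [h|h t]; first by have := h w; rewrite /cplx1 eqxx /mono count_gt0_mem.
rewrite /cplx1 /mono; case: eqP => [->|] //=; by rewrite count_gt0_mem.
Qed.

Lemma lem2 (a b : T) (xs : seq T) : a != b -> lem (cplx2 a b) (mono xs) = (a \in xs) && (b \in xs).
Proof.
move=> hab; apply/forallP/andP => [h|[ha hb] t].
  have := h a; have := h b; rewrite /cplx2 !eqxx (negbTE hab) eq_sym (negbTE hab) /mono /=.
  by rewrite !count_gt0_mem => -> ->.
rewrite /cplx2 /mono; case: (eqVneq t a) => ta; case: (eqVneq t b) => tb; subst => //=;
  rewrite ?count_gt0_mem //; by rewrite eqxx in hab.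
Qed.

Section Chain.
Variable i : 'I_N.

Definition sidx t : option nat := omap val [pick x : 'I_(L i).+1 | t == S i x].
Definition uidx t : option nat := omap val [pick x : 'I_(L i).+1 | (0 < x)%N && (t == U i x)].
Definition vidx t : option nat := omap val [pick x : 'I_(L i).+1 | (0 < x)%N && (t == V i x)].

Lemma sidxS x : (x <= L i)%N -> sidx (S i x) = Some x.
Proof.
move=> hx; rewrite /sidx; case: pickP => [y /eqP e|h] /=.
  by rewrite (S_inj hx _ e) // -ltnS ltn_ord.
by have := h (Ordinal (hx : x < (L i).+1)%N); rewrite eqxx.
Qed.
Lemma sidx_Some t x : sidx t = Some x -> t = S i x /\ (x <= L i)%N.
Proof.
rewrite /sidx; case: pickP => [y /eqP e|h] //= [<-]; split => //; by rewrite -ltnS ltn_ord.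
Qed.
Lemma uidxU x : (1 <= x <= L i)%N -> uidx (U i x) = Some x.
Proof.
move=> hx; rewrite /uidx; case: pickP => [y /andP[y0 /eqP e]|h] /=.
  have hy : (1 <= y <= L i)%N by rewrite y0 -ltnS ltn_ord.
  by case: (U_inj hx hy e) => _ ->.
have hx' : (x < (L i).+1)%N by case/andP: hx.
by have := h (Ordinal hx'); rewrite eqxx /=; case/andP: hx => ->.
Qed.
Lemma uidx_Some t x : uidx t = Some x -> t = U i x /\ (1 <= x <= L i)%N.
Proof.
rewrite /uidx; case: pickP => [y /andP[y0 /eqP e]|h] //= [<-]; split => //; by rewrite y0 -ltnS ltn_ord.
Qed.
Lemma vidxV x : (1 <= x <= L i)%N -> vidx (V i x) = Some x.
Proof.
move=> hx; rewrite /vidx; case: pickP => [y /andP[y0 /eqP e]|h] /=.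
  have hy : (1 <= y <= L i)%N by rewrite y0 -ltnS ltn_ord.
  by case: (V_inj hx hy e) => _ ->.
have hx' : (x < (L i).+1)%N by case/andP: hx.
by have := h (Ordinal hx'); rewrite eqxx /=; case/andP: hx => ->.
Qed.
Lemma vidx_Some t x : vidx t = Some x -> t = V i x /\ (1 <= x <= L i)%N.
Proof.
rewrite /vidx; case: pickP => [y /andP[y0 /eqP e]|h] //= [<-]; split => //; by rewrite y0 -ltnS ltn_ord.
Qed.
Lemma sidx_None_ni t : is_inter L U V t -> sidx t = None.
Proof.
move=> ht; case e: (sidx t) => [x|] //; case: (sidx_Some e) => e' hx.
by case: (inter_nonint ht); rewrite e'; exact: S_ni.
Qed.
Lemma uidx_None_ni t : is_nonint L Y Yt S t -> uidx t = None.
Proof.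
move=> ht; case e: (uidx t) => [x|] //; case: (uidx_Some e) => e' hx.
by case: (inter_nonint (U_int hx)); rewrite -e'.
Qed.
Lemma vidx_None_ni t : is_nonint L Y Yt S t -> vidx t = None.
Proof.
move=> ht; case e: (vidx t) => [x|] //; case: (vidx_Some e) => e' hx.
by case: (inter_nonint (V_int hx)); rewrite -e'.
Qed.
Lemma uidx_V x : (1 <= x <= L i)%N -> uidx (V i x) = None.
Proof.
move=> hx; case e: (uidx _) => [y|] //; case: (uidx_Some e) => e' hy.
by case: (U_V hy hx).
Qed.

Definition lab t : nat * nat :=
  if t == Y i then (1, 0)%N else if t == Yt i then (2, 0)%N else
  match sidx t with Some x => (3, x)%N | None =>
  match uidx t with Some x => (4, x)%N | None =>
  match vidx t with Some x => (5, x)%N | None => (0, 0)%N end end end.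

Definition labinv (p : nat * nat) : T :=
  match p.1 with 1 => Y i | 2 => Yt i | 3 => S i p.2 | 4 => U i p.2 | _ => V i p.2 end.

Lemma lab_inv t : lab t != (0, 0)%N -> labinv (lab t) = t.
Proof.
rewrite /lab; case: (eqVneq t (Y i)) => [->|_] //; case: (eqVneq t (Yt i)) => [->|_] //=.
case e: (sidx t) => [x|]; first by case: (sidx_Some e) => ->.
case e': (uidx t) => [x|]; first by case: (uidx_Some e') => ->.
case e'': (vidx t) => [x|] //; by case: (vidx_Some e'') => ->.
Qed.

Lemma lab_inj t t' : lab t != (0, 0)%N -> lab t = lab t' -> t = t'.
Proof. move=> h e; by rewrite -(lab_inv h) e lab_inv // -e. Qed.

Lemma labY : lab (Y i) = (1, 0)%N. Proof. by rewrite /lab eqxx. Qed.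
Lemma labYt : lab (Yt i) = (2, 0)%N.
Proof. by rewrite /lab eq_sym (negbTE (Y_Yt i)) eqxx. Qed.
Lemma labS x : (x <= L i)%N -> lab (S i x) = (3, x)%N.
Proof.
move=> hx; rewrite /lab.
have /negbTE -> : S i x != Y i by apply/eqP => e; apply: (Y_S hx); rewrite e.
have /negbTE -> : S i x != Yt i by apply/eqP => e; apply: (Yt_S hx); rewrite e.
by rewrite sidxS.
Qed.
Lemma labU x : (1 <= x <= L i)%N -> lab (U i x) = (4, x)%N.
Proof.
move=> hx; rewrite /lab.
rewrite (negbTE (int_ne (U_int hx) (Y_ni i))) (negbTE (int_ne (U_int hx) (Yt_ni i))).
by rewrite sidx_None_ni ?uidxU //; exact: U_int.
Qed.
Lemma labV x : (1 <= x <= L i)%N -> lab (V i x) = (5, x)%N.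
Proof.
move=> hx; rewrite /lab.
rewrite (negbTE (int_ne (V_int hx) (Y_ni i))) (negbTE (int_ne (V_int hx) (Yt_ni i))).
by rewrite sidx_None_ni ?uidx_V ?vidxV //; exact: V_int.
Qed.

Lemma mem_lab t (xs : seq T) : lab t != (0, 0)%N ->
  (t \in xs) = (lab t \in map lab xs).
Proof.
move=> h; elim: xs => [|x xs IH] //=; rewrite !inE IH; congr (_ || _).
apply/eqP/eqP => [->|e] //; exact: lab_inj h e.
Qed.

Inductive cl := CY | CT | CS of nat | CO.
Definition cls t := if t == Y i then CY else if t == Yt i then CT else
  if sidx t is Some x then CS x else CO.
Definition okc c := if c is CS x then (x <= L i)%N else true.
Definition isS c := if c is CS _ then true else false.
Definition isE c := match c with CY | CT => true | _ => false end.
Definition allowed cE cP cQ := match cE with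
  | CY => [&& ~~ isS cP, (if cP is CY then false else true), ~~ isS cQ &
              (if cQ is CY then false else true)]
  | CT => [&& ~~ isS cP, (if cP is CT then false else true), ~~ isS cQ &
              (if cQ is CT then false else true)]
  | CS _ => ~~ isS cP && ~~ isS cQ
  | CO => ~~ (isS cP && isE cQ) && ~~ (isE cP && isS cQ) end.

Lemma clsY : cls (Y i) = CY. Proof. by rewrite /cls eqxx. Qed.
Lemma clsYt : cls (Yt i) = CT. Proof. by rewrite /cls eq_sym (negbTE (Y_Yt i)) eqxx. Qed.
Lemma clsS x : (x <= L i)%N -> cls (S i x) = CS x.
Proof.
move=> hx; rewrite /cls.
have /negbTE -> : S i x != Y i by apply/eqP => e; apply: (Y_S hx); rewrite e.
have /negbTE -> : S i x != Yt i by apply/eqP => e; apply: (Yt_S hx); rewrite e.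
by rewrite sidxS.
Qed.
Lemma clsE t : [/\ cls t = CY -> t = Y i, cls t = CT -> t = Yt i &
   forall x, cls t = CS x -> t = S i x /\ (x <= L i)%N].
Proof.
rewrite /cls; case: (eqVneq t (Y i)) => [->|_] //; case: (eqVneq t (Yt i)) => [->|_] //.
case e: (sidx t) => [x|] //; split => // y [<-]; exact: sidx_Some.
Qed.
Lemma okc_cls t : okc (cls t).
Proof.
rewrite /cls; case: ifP => _ //; case: ifP => _ //.
by case e: (sidx t) => [x|] //=; case: (sidx_Some e).
Qed.

Lemma cni_cls t : isS (cls t) || isE (cls t) -> cni i t.
Proof.
case: (clsE t) => h1 h2 h3; case e: (cls t) => [| |x|] //= _.
- by left; exact: h1.
- by right; left; exact: h2.
- by right; right; case: (h3 _ e) => -> hx; exists x.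
Qed.

Lemma SY_ne y : (y <= L i)%N -> S i y <> Y i /\ S i y <> Yt i.
Proof. move=> hy; split => e; [apply: (Y_S hy)|apply: (Yt_S hy)]; by rewrite e. Qed.

Lemma oth_A i' b' z : (z <= L i')%N -> i' != i ->
  isS (cls (enz Y Yt i' b')) || isE (cls (enz Y Yt i' b')) -> isS (cls (S i' z)) -> False.
Proof.
move=> hz hi hE hP.
have hP' : cni i (S i' z) by apply: cni_cls; rewrite hP.
case: (clsE (S i' z)) => _ _ h3; move: hP; case eP: (cls (S i' z)) => [| |y|] // _.
case: (h3 _ eP) => ey hy; have [n1 n2] := SY_ne hy.
move: hi; rewrite (c2_chain hz (cni_cls hE) hP') ?eqxx //; rewrite ey; by case.
Qed.

Lemma oth_B i' b' z : (z <= L i')%N -> i' != i ->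
  isS (cls (enz Y Yt i' b')) -> isE (cls (S i' z)) -> False.
Proof.
move=> hz hi hE hP.
have hP' : cni i (S i' z) by apply: cni_cls; rewrite hP orbT.
have hE' : cni i (enz Y Yt i' b') by apply: cni_cls; rewrite hE.
case: (clsE (enz Y Yt i' b')) => _ _ h3; move: hE; case eE: (cls _) => [| |a|] // _.
case: (h3 _ eE) => ea ha; have [n1 n2] := SY_ne ha.
move: hi; rewrite (c2_chain hz hE' hP') ?eqxx //; rewrite ea; by case.
Qed.

Lemma oth_C i' b' z : (z <= L i')%N ->
  (cls (enz Y Yt i' b') = CY -> cls (S i' z) = CY -> False) /\
  (cls (enz Y Yt i' b') = CT -> cls (S i' z) = CT -> False).
Proof.
move=> hz; case: (clsE (enz Y Yt i' b')) => e1 e2 _; case: (clsE (S i' z)) => p1 p2 _.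
split => h h'; apply: (elimN eqP (enz_S b' hz)).
  by rewrite (e1 h) (p1 h').
by rewrite (e2 h) (p2 h').
Qed.

Lemma oth_D i' x x' : (x <= L i')%N -> (x' <= L i')%N ->
  isS (cls (S i' x)) -> isE (cls (S i' x')) -> False.
Proof.
move=> hx hx' hP hQ.
have [part [hp1 hp2 hp3]] := parts.
case: (clsE (S i' x)) => _ _ h3; move: hP; case eP: (cls (S i' x)) => [| |y|] // _.
case: (h3 _ eP) => ey hy.
case: (clsE (S i' x')) => q1 q2 _; move: hQ; case eQ: (cls (S i' x')) => [| | |] // _.
- apply: (hp2 i y hy); by rewrite -(q1 eQ) -ey (hp1 _ _ _ hx' hx).
- apply: (hp3 i y hy); by rewrite -(q2 eQ) -ey (hp1 _ _ _ hx' hx).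
Qed.

Lemma allowed_other i' b' x x' : (x <= L i')%N -> (x' <= L i')%N -> i' != i ->
  allowed (cls (enz Y Yt i' b')) (cls (S i' x)) (cls (S i' x')).
Proof.
move=> hx hx' hi.
have A1 := oth_A hx hi (b':=b'); have A2 := oth_A hx' hi (b':=b').
have B1 := oth_B hx hi (b':=b'); have B2 := oth_B hx' hi (b':=b').
have [C1 C1'] := oth_C b' hx; have [C2 C2'] := oth_C b' hx'.
have D1 := oth_D hx hx'; have D2 := oth_D hx' hx.
case eE: (cls _) A1 A2 B1 B2 C1 C1' C2 C2' => [| |a|] /= A1 A2 B1 B2 C1 C1' C2 C2'.
- apply/and4P; split.
  + by apply/negP => h; exact: (A1 isT h).
  + by case e: (cls (S i' x)) => //; case: (C1 (erefl _) e).
  + by apply/negP => h; exact: (A2 isT h).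
  + by case e: (cls (S i' x')) => //; case: (C2 (erefl _) e).
- apply/and4P; split.
  + by apply/negP => h; exact: (A1 isT h).
  + by case e: (cls (S i' x)) => //; case: (C1' (erefl _) e).
  + by apply/negP => h; exact: (A2 isT h).
  + by case e: (cls (S i' x')) => //; case: (C2' (erefl _) e).
- by apply/andP; split; apply/negP => h; [exact: (A1 isT h)|exact: (A2 isT h)].
- by apply/andP; split; apply/negP => /andP [h h']; [exact: D1 h h'|exact: D2 h' h].
Qed.

Section Pot.
Variables (wy wt wo : int) (ws wu wv : nat -> int).

Definition cv c := match c with CY => wy | CT => wt | CS x => ws x | CO => wo end.
Definition phin t := cv (cls t).
Definition Bd := (\max_(i0 : 'I_N) L i0).+1.
Definition upk t := [pick p : 'I_N * 'I_Bd | (1 <= p.2 <= L p.1)%N && (t == U p.1 p.2)].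
Definition vpk t := [pick p : 'I_N * 'I_Bd | (1 <= p.2 <= L p.1)%N && (t == V p.1 p.2)].
Definition phi t : int :=
  match upk t with
  | Some p => if p.1 == i then wu p.2 else phin (Y p.1) + phin (S p.1 (p.2).-1) + 1
  | None => match vpk t with
    | Some p => if p.1 == i then wv p.2 else phin (Yt p.1) + phin (S p.1 p.2) + 1
    | None => phin t end end.

Lemma ltBd i' j : (j <= L i')%N -> (j < Bd)%N.
Proof. move=> hj; rewrite /Bd ltnS; apply: (leq_trans hj); exact: (leq_bigmax i'). Qed.

Lemma phiU i' j : (1 <= j <= L i')%N ->
  phi (U i' j) = if i' == i then wu j else phin (Y i') + phin (S i' j.-1) + 1.
Proof.
move=> hj; rewrite /phi /upk; case: pickP => [[a b] /= /andP [hb /eqP e]|h].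
  case: (U_inj hj hb e) => e1 e2; subst; reflexivity.
have hb : (j < Bd)%N by apply: (ltBd (i' := i')); case/andP: hj => _ ->.
by have := h (i', Ordinal hb); rewrite /= hj eqxx.
Qed.

Lemma phiV i' j : (1 <= j <= L i')%N ->
  phi (V i' j) = if i' == i then wv j else phin (Yt i') + phin (S i' j) + 1.
Proof.
move=> hj; rewrite /phi /upk; case: pickP => [[a b] /= /andP [hb /eqP e]|_].
  by case: (U_V hb hj (esym e)).
rewrite /vpk; case: pickP => [[a b] /= /andP [hb /eqP e]|h].
  case: (V_inj hj hb e) => e1 e2; subst; reflexivity.
have hb : (j < Bd)%N by apply: (ltBd (i' := i')); case/andP: hj => _ ->.
by have := h (i', Ordinal hb); rewrite /= hj eqxx.
Qed.

Lemma phi_ni t : is_nonint L Y Yt S t -> phi t = phin t.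
Proof.
move=> ht; rewrite /phi /upk; case: pickP => [[a b] /= /andP [hb /eqP e]|_].
  by case: (inter_nonint (U_int hb)); rewrite -e.
rewrite /vpk; case: pickP => [[a b] /= /andP [hb /eqP e]|_] //.
by case: (inter_nonint (V_int hb)); rewrite -e.
Qed.

Hypothesis Hge : forall c, okc c -> -1 <= cv c.
Hypothesis HU : forall x, (1 <= x <= L i)%N ->
  [/\ wu x <= wy + ws x.-1 + 1, wy <= wu x + 1, ws x.-1 <= wu x + 1 & ws x <= wu x + 1].
Hypothesis HV : forall x, (1 <= x <= L i)%N ->
  [/\ wv x <= wt + ws x + 1, wt <= wv x + 1, ws x <= wv x + 1 & ws x.-1 <= wv x + 1].
Hypothesis Hoth : forall cE cP cQ, okc cE -> okc cP -> okc cQ -> allowed cE cP cQ ->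
  cv cQ <= cv cE + cv cP + 2.

Lemma phin_ge t : -1 <= phin t. Proof. exact: Hge (okc_cls t). Qed.

Lemma phinY : phin (Y i) = wy. Proof. by rewrite /phin clsY. Qed.
Lemma phinYt : phin (Yt i) = wt. Proof. by rewrite /phin clsYt. Qed.
Lemma phinS x : (x <= L i)%N -> phin (S i x) = ws x. Proof. by move=> hx; rewrite /phin clsS. Qed.

Lemma oth_constr i' b' x x' : (x <= L i')%N -> (x' <= L i')%N -> i' != i ->
  phin (S i' x') <= phin (enz Y Yt i' b') + phin (S i' x) + 2.
Proof. move=> hx hx' hi; apply: Hoth; rewrite ?okc_cls //; exact: allowed_other. Qed.



Lemma pvalid_net (k : rates N R) : pvalid phi (network L Y Yt S U V k).
Proof.
move=> r /network_In [i' [j' [hj hin]]] s.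
have hj1 : (j'.-1 <= L i')%N by case/andP: hj => _ h; apply: leq_trans h; exact: leq_pred.
have hj2 : (j' <= L i')%N by case/andP: hj.
have hY := phi_ni (Y_ni i'); have hYt := phi_ni (Yt_ni i').
have hS1 := phi_ni (S_ni hj1); have hS2 := phi_ni (S_ni hj2).
have hU := phiU hj; have hV := phiV hj.
have g1 := phin_ge (Y i'); have g2 := phin_ge (Yt i'); have g3 := phin_ge (S i' j'.-1);
have g4 := phin_ge (S i' j').
have oc1 := @oth_constr i' false j'.-1 j' hj1 hj2.
have oc2 := @oth_constr i' true j' j'.-1 hj2 hj1.
move: oc1 oc2 => /= oc1 oc2.
case: hin => [<-|[<-|[<-|[<-|[<-|[<-|[]]]]]]] /=; rewrite ?cplx1E ?cplx2E Phi_mono;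
  rewrite ?big_cons ?big_nil => /mono_ne; rewrite !inE -?orbA ?orbF;
  (case/or3P => [/eqP->|/eqP->|/eqP->] || case/or4P => [/eqP->|/eqP->|/eqP->|/eqP->]);
  rewrite ?hY ?hYt ?hS1 ?hS2 ?hU ?hV;
  case: (eqVneq i' i) => [ei|ni]; (try subst i'); rewrite ?phinY ?phinYt ?phinS // in g1 g2 g3 g4 *;
  try (case: (HU hj) => *; lia); try (case: (HV hj) => *; lia);
  try (have := oc1 ni; lia); try (have := oc2 ni; lia); lia.
Qed.
Lemma phiY : phi (Y i) = wy. Proof. by rewrite phi_ni ?phinY //; exact: Y_ni. Qed.
Lemma phiYt : phi (Yt i) = wt. Proof. by rewrite phi_ni ?phinYt //; exact: Yt_ni. Qed.
Lemma phiS x : (x <= L i)%N -> phi (S i x) = ws x.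
Proof. by move=> hx; rewrite phi_ni ?phinS //; exact: S_ni. Qed.
Lemma phiUi x : (1 <= x <= L i)%N -> phi (U i x) = wu x.
Proof. by move=> hx; rewrite phiU // eqxx. Qed.
Lemma phiVi x : (1 <= x <= L i)%N -> phi (V i x) = wv x.
Proof. by move=> hx; rewrite phiV // eqxx. Qed.
End Pot.

Definition chsp t := t = Y i \/ t = Yt i \/ (exists2 x, (x <= L i)%N & t = S i x) \/
  (exists2 x, (1 <= x <= L i)%N & t = U i x) \/ (exists2 x, (1 <= x <= L i)%N & t = V i x).

Lemma lab_chsp t : lab t != (0, 0)%N -> chsp t.
Proof.
rewrite /lab; case: (eqVneq t (Y i)) => [->|_]; first by left.
case: (eqVneq t (Yt i)) => [->|_]; first by right; left.
case e: (sidx t) => [x|]; first by case: (sidx_Some e) => -> hx; right; right; left; exists x.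
case e': (uidx t) => [x|]; first by case: (uidx_Some e') => -> hx; do 3 right; left; exists x.
case e'': (vidx t) => [x|]; last by rewrite eqxx.
by case: (vidx_Some e'') => -> hx; do 4 right; exists x.
Qed.

Lemma chsp_cni t : chsp t -> is_nonint L Y Yt S t -> cni i t.
Proof.
case=> [->|[->|[[x hx ->]|[[x hx ->]|[x hx ->]]]]] h.
- by left. - by right; left. - by right; right; exists x.
- by case: (inter_nonint (U_int hx) h).
- by case: (inter_nonint (V_int hx) h).
Qed.

Definition okxs (xs : seq T) :=
  all (fun x => lab x != (0, 0)%N) xs && ~~ ((Y i \in xs) && (Yt i \in xs)).

Lemma okxs_chsp xs t : okxs xs -> t \in xs -> chsp t.
Proof. by case/andP => /allP h _ /h; exact: lab_chsp. Qed.

Lemma other_int i' j' xs : okxs xs -> i' != i -> (1 <= j' <= L i')%N ->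
  U i' j' \notin xs /\ V i' j' \notin xs.
Proof.
move=> hxs hi hj; split; apply/negP => /(okxs_chsp hxs);
  case=> [e|[e|[[x hx e]|[[x hx e]|[x hx e]]]]].
- by case: (inter_nonint (U_int hj)); rewrite e; exact: Y_ni.
- by case: (inter_nonint (U_int hj)); rewrite e; exact: Yt_ni.
- by case: (inter_nonint (U_int hj)); rewrite e; exact: S_ni.
- by case: (U_inj hj hx e) => ei; move: hi; rewrite ei eqxx.
- by case: (U_V hj hx e).
- by case: (inter_nonint (V_int hj)); rewrite e; exact: Y_ni.
- by case: (inter_nonint (V_int hj)); rewrite e; exact: Yt_ni.
- by case: (inter_nonint (V_int hj)); rewrite e; exact: S_ni.
- by case: (U_V hx hj (esym e)).
- by case: (V_inj hj hx e) => ei; move: hi; rewrite ei eqxx.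
Qed.

Lemma other_bin i' b' x xs : okxs xs -> i' != i -> (x <= L i')%N ->
  ~~ ((enz Y Yt i' b' \in xs) && (S i' x \in xs)).
Proof.
move=> hxs hi hx; apply/negP => /andP [h1 h2].
have c1 := chsp_cni (okxs_chsp hxs h1) (enz_ni i' b').
have c2 := chsp_cni (okxs_chsp hxs h2) (S_ni hx).
case/andP: hxs => _ /negP hn.
move: hi; rewrite (c2_chain hx c1 c2) ?eqxx // => [[e1 e2]|[e1 e2]]; apply: hn.
- by rewrite -e1 -e2 h1 h2.
- by rewrite -e1 -e2 h1 h2.
Qed.

Lemma Y_S_ne i' x : (x <= L i')%N -> Y i' != S i' x.
Proof. by move=> hx; apply/eqP; exact: Y_S. Qed.
Lemma Yt_S_ne i' x : (x <= L i')%N -> Yt i' != S i' x.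
Proof. by move=> hx; apply/eqP; exact: Yt_S. Qed.

Lemma nle_other (k : rates N R) i' j' (xs : seq T) p :
  okxs xs -> i' != i -> (1 <= j' <= L i')%N ->
  forall r, List.In r (six k i' j') -> rterm r p (mono xs) = 0.
Proof.
move=> hxs hi hj.
have hj1 : (j'.-1 <= L i')%N by case/andP: hj => _ h; apply: leq_trans h; exact: leq_pred.
have hj2 : (j' <= L i')%N by case/andP: hj.
have [nu nv] := other_int hxs hi hj.
have b1 := other_bin false hxs hi hj1; have b2 := other_bin true hxs hi hj2.
move=> r; case=> [<-|[<-|[<-|[<-|[<-|[<-|[]]]]]]]; apply: rterm_nle => /=;
  rewrite ?lem1 // ?lem2 //; exact: Y_S_ne || exact: Yt_S_ne.
Qed.

Lemma net_reduce (k : rates N R) p (xs : seq T) : okxs xs ->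
  totder (network L Y Yt S U V k) p (mono xs) =
  \sum_(j <- iota 1 (L i)) \sum_(r <- six k i j) rterm r p (mono xs).
Proof.
move=> hxs; rewrite totderE network_sum (bigD1 i) //= [X in _ + X]big1 ?addr0 // => i' hi'.
rewrite big_seq big1 // => j; rewrite mem_iota => hj.
apply: sum_In0 => r hr; apply: (nle_other p hxs hi' _ hr); lia.
Qed.


Lemma lemU j (xs : seq T) : (1 <= j <= L i)%N ->
  lem (cplx1 (U i j)) (mono xs) = ((4, j)%N \in map lab xs).
Proof. by move=> hj; rewrite lem1 mem_lab ?labU. Qed.
Lemma lemV j (xs : seq T) : (1 <= j <= L i)%N ->
  lem (cplx1 (V i j)) (mono xs) = ((5, j)%N \in map lab xs).
Proof. by move=> hj; rewrite lem1 mem_lab ?labV. Qed.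
Lemma lemA j (xs : seq T) : (1 <= j <= L i)%N ->
  lem (cplx2 (Y i) (S i j.-1)) (mono xs) =
  ((1, 0)%N \in map lab xs) && ((3, j.-1)%N \in map lab xs).
Proof.
move=> hj; have hj1 : (j.-1 <= L i)%N by case/andP: hj => _ h; apply: leq_trans h; exact: leq_pred.
by rewrite lem2 ?Y_S_ne // mem_lab ?labY // mem_lab ?labS.
Qed.
Lemma lemAt j (xs : seq T) : (j <= L i)%N ->
  lem (cplx2 (Yt i) (S i j)) (mono xs) =
  ((2, 0)%N \in map lab xs) && ((3, j)%N \in map lab xs).
Proof. by move=> hj; rewrite lem2 ?Yt_S_ne // mem_lab ?labYt // mem_lab ?labS. Qed.

Lemma sumj0 (g : nat -> R) : (forall j, (1 <= j <= L i)%N -> g j = 0) ->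
  \sum_(j <- iota 1 (L i)) g j = 0.
Proof. move=> h; rewrite big_seq big1 // => j; rewrite mem_iota => hj; apply: h; lia. Qed.

Lemma sumj1 (g : nat -> R) j0 : (1 <= j0 <= L i)%N ->
  (forall j, (1 <= j <= L i)%N -> j != j0 -> g j = 0) ->
  \sum_(j <- iota 1 (L i)) g j = g j0.
Proof.
move=> hj0 h; rewrite (bigD1_seq j0) ?iota_uniq //=; last by rewrite mem_iota; lia.
rewrite big_seq_cond big1 ?addr0 // => j /andP [hj hne]; apply: h => //.
move: hj; rewrite mem_iota; lia.
Qed.

Lemma sumj2 (g : nat -> R) j0 j1 : (1 <= j0 <= L i)%N -> (1 <= j1 <= L i)%N -> j0 != j1 ->
  (forall j, (1 <= j <= L i)%N -> j != j0 -> j != j1 -> g j = 0) ->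
  \sum_(j <- iota 1 (L i)) g j = g j0 + g j1.
Proof.
move=> hj0 hj1 hne h.
have -> : \sum_(j <- iota 1 (L i)) g j =
  \sum_(j <- iota 1 (L i)) (if j == j0 then g j else 0) +
  \sum_(j <- iota 1 (L i)) (g j - if j == j0 then g j else 0).
  by rewrite -big_split /=; apply: eq_bigr => j _; rewrite addrC subrK.
rewrite (sumj1 (j0 := j0)) ?eqxx //; last by move=> j _ /negbTE ->.
rewrite (sumj1 (j0 := j1)) //; first by rewrite eq_sym (negbTE hne) subr0.
move=> j hj hj1'; case: (eqVneq j j0) => [->|hj0']; first by rewrite subrr.
by rewrite subr0; apply: h.
Qed.


Definition sg : int := (2 * L i)%N%:Z.
Definition wsA (x : nat) : int := sg + (2 * x)%N%:Z.
Definition wuA (x : nat) : int := sg + (2 * x)%N%:Z - 1.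
Definition phiA := phi 0 (sg + 1) (sg + 2) wsA wuA wuA.

Lemma pvA (k : rates N R) : pvalid phiA (network L Y Yt S U V k).
Proof.
apply: pvalid_net; rewrite /wsA /wuA /sg.
- by case=> [| |x|] //= hx; lia.
- move=> x hx; split; lia.
- move=> x hx; split; lia.
- by case=> [| |a|] [| |b|] [| |c|] //= ha hb hc _; lia.
Qed.

Ltac ifs := repeat match goal with |- context [if ?b then _ else _] => case: (boolP b) => ? end.

Definition wsT (x : nat) : int := if (x < L i)%N then -1 else 1.
Definition wuT (x : nat) : int := if (x < L i)%N then -1 else 0.
Definition wvT (x : nat) : int := if (x < L i)%N then -2 else 0.
Definition phiT := phi 0 (-1) 0 wsT wuT wvT.

Lemma pvT (k : rates N R) : pvalid phiT (network L Y Yt S U V k).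
Proof.
apply: pvalid_net; rewrite /wsT /wuT /wvT.
- by case=> [| |x|] //= hx; ifs; lia.
- move=> x hx; ifs; split; lia.
- move=> x hx; ifs; split; lia.
- by case=> [| |a|] [| |b|] [| |c|] //= ha hb hc _; ifs; lia.
Qed.

Definition wsB (x : nat) : int := if (x < L i)%N then 0 else 2.
Definition wuB (x : nat) : int := if (x < L i)%N then -1 else 1.
Definition wvB (x : nat) : int := if (x < L i)%N then 0 else 1.
Definition phiB := phi 0 0 0 wsB wuB wvB.

Lemma pvB (k : rates N R) : pvalid phiB (network L Y Yt S U V k).
Proof.
apply: pvalid_net; rewrite /wsB /wuB /wvB.
- by case=> [| |x|] //= hx; ifs; lia.
- move=> x hx; ifs; split; lia.
- move=> x hx; ifs; split; lia.
- by case=> [| |a|] [| |b|] [| |c|] //= ha hb hc _; ifs; lia.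
Qed.

Definition ws1 (x : nat) : int := if x == 0%N then -1 else if (x < L i)%N then 0 else 2.
Definition wu1 (x : nat) : int := if (x < L i)%N then -1 else 1.
Definition wv1 (x : nat) : int := if (x < L i)%N then 0 else 1.
Definition phi1 := phi 0 1 1 ws1 wu1 wv1.

Lemma pv1 (k : rates N R) : (2 <= L i)%N -> pvalid phi1 (network L Y Yt S U V k).
Proof.
move=> hL2; apply: pvalid_net; rewrite /ws1 /wu1 /wv1.
- by case=> [| |x|] //= hx; ifs; lia.
- move=> x hx; ifs; split; lia.
- move=> x hx; ifs; split; lia.
- by case=> [| |a|] [| |b|] [| |c|] //= ha hb hc _; ifs; lia.
Qed.

Lemma okxsE (xs : seq T) : okxs xs =
  all (fun p => p != (0, 0)%N) (map lab xs) &&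
  ~~ (((1, 0)%N \in map lab xs) && ((2, 0)%N \in map lab xs)).
Proof. by rewrite /okxs all_map -labY -labYt -!mem_lab ?labY ?labYt. Qed.

Section Targets.
Variable k : rates N R.
Local Notation rx := (network L Y Yt S U V k).
Local Notation s0 := (S i (L i)).

Lemma L_pos : (0 < L i)%N. Proof. exact: hL. Qed.

Ltac phic := rewrite !Phi_mono !big_cons !big_nil ?sum_nseq ?/phiA ?/phiT ?/phiB ?/phi1 ?phiY ?phiYt ?phiS ?phiUi ?phiVi;
  rewrite ?/wsA ?/wuA ?/sg ?/wsT ?/wuT ?/wvT ?/wsB ?/wuB ?/wvB ?/ws1 ?/wu1 ?/wv1; ifs; try lia.

Lemma rterm_if2 (kk : R) (y y' : T -> nat) p m :
  rterm (kk, y, y') p m = if lem y m then rterm (kk, y, y') p m else 0.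
Proof. by case: ifP => // /negbT h; rewrite rterm_nle. Qed.

Lemma six_eval j p m : \sum_(r <- six k i j) rterm r p m =
  (if lem (cplx2 (Y i) (S i j.-1)) m then rterm (ka k i j, cplx2 (Y i) (S i j.-1), cplx1 (U i j)) p m else 0) +
  (if lem (cplx1 (U i j)) m then rterm (kb k i j, cplx1 (U i j), cplx2 (Y i) (S i j.-1)) p m else 0) +
  (if lem (cplx1 (U i j)) m then rterm (kc k i j, cplx1 (U i j), cplx2 (Y i) (S i j)) p m else 0) +
  (if lem (cplx2 (Yt i) (S i j)) m then rterm (kat k i j, cplx2 (Yt i) (S i j), cplx1 (V i j)) p m else 0) +
  (if lem (cplx1 (V i j)) m then rterm (kbt k i j, cplx1 (V i j), cplx2 (Yt i) (S i j)) p m else 0) +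
  (if lem (cplx1 (V i j)) m then rterm (kct k i j, cplx1 (V i j), cplx2 (Yt i) (S i j.-1)) p m else 0).
Proof.
rewrite /six !big_cons big_nil addr0 !addrA.
by rewrite -!rterm_if2.
Qed.

Ltac labc := rewrite ?map_cons ?map_nseq ?labU ?labV ?labY ?labYt ?labS //=;
  rewrite ?inE ?mem_nseq ?xpair_eqE /= ?andbF ?andbT ?orbF ?orbT //=.

Lemma desc_F kk : (kk < L i)%N ->
  xder rx (2 * kk).+1 s0 (mono (U i (L i - kk) :: nseq kk (Y i))) =
  kc k i (L i - kk) * xder rx (2 * kk) s0 (mono (S i (L i - kk) :: nseq kk (Y i))).
Proof.
move=> hk; set j := (L i - kk)%N.
have hj : (1 <= j <= L i)%N by rewrite /j; lia.
have hj1 : (j.-1 <= L i)%N by lia.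
have hj2 : (j <= L i)%N by lia.
have hv := pvA (k := k).
rewrite xderS net_reduce; last by rewrite okxsE /= map_nseq labU // labY all_nseq /= orbT /= !inE !mem_nseq /= !andbF.
rewrite (sumj1 (j0 := j)) //; last first.
  move=> j' hj' hne; rewrite six_eval.
  have hj1' : (j'.-1 <= L i)%N by lia.
  have hj2' : (j' <= L i)%N by lia.
  by rewrite lemU ?lemV ?lemA ?lemAt //; labc; rewrite (negbTE hne) !addr0.
rewrite six_eval lemU ?lemV ?lemA ?lemAt //; labc; rewrite ?eqxx ?addr0 ?add0r.
have hle : lem (mono [:: U i j]) (mono (U i j :: nseq kk (Y i))) by rewrite -cplx1E lemU //; labc.
rewrite !rt_unb //.
rewrite (Xz hv hle (s := Y i)); last by phic.
rewrite (Xz hv hle (s := S i j.-1)); last by phic.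
rewrite (Xz hv hle (s := U i j)); last by phic.
rewrite (@Xv _ _ _ _ (nseq kk (Y i)) (S i j) _ (perm_refl _)).
rewrite count_nseq /= (negbTE (Y_S_ne hj2)) mul0n.
by rewrite !(add0r, subr0, mulr0, mul1r).
Qed.


Lemma desc_H kk : (kk < L i)%N ->
  xder rx (2 * kk).+1 s0 (mono (V i (L i - kk) :: nseq kk (Y i))) =
  kbt k i (L i - kk) * xder rx (2 * kk) s0 (mono (S i (L i - kk) :: nseq kk (Y i))).
Proof.
move=> hk; set j := (L i - kk)%N.
have hj : (1 <= j <= L i)%N by rewrite /j; lia.
have hj1 : (j.-1 <= L i)%N by lia.
have hj2 : (j <= L i)%N by lia.
have hv := pvA (k := k).
rewrite xderS net_reduce; last by rewrite okxsE /= map_nseq labV // labY all_nseq /= orbT /= !inE !mem_nseq /= !andbF.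
rewrite (sumj1 (j0 := j)) //; last first.
  move=> j' hj' hne; rewrite six_eval.
  have hj1' : (j'.-1 <= L i)%N by lia.
  have hj2' : (j' <= L i)%N by lia.
  by rewrite lemU ?lemV ?lemA ?lemAt //; labc; rewrite (negbTE hne) !addr0.
rewrite six_eval lemU ?lemV ?lemA ?lemAt //; labc; rewrite ?eqxx ?addr0 ?add0r.
have hle : lem (mono [:: V i j]) (mono (V i j :: nseq kk (Y i))) by rewrite -cplx1E lemV //; labc.
rewrite !rt_unb //.
rewrite (Xz hv hle (s := Yt i)); last by phic.
rewrite (Xz hv hle (s := S i j.-1)); last by phic.
rewrite (Xz hv hle (s := V i j)); last by phic.
rewrite (@Xv _ _ _ _ (nseq kk (Y i)) (S i j) _ (perm_refl _)).
rewrite count_nseq /= (negbTE (Y_S_ne hj2)) mul0n.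
by rewrite !(add0r, addr0, subr0, mulr0, mul1r).
Qed.

Lemma desc_G kk : (kk < L i)%N ->
  xder rx (2 * kk).+2 s0 (mono (S i (L i - kk.+1) :: nseq kk.+1 (Y i))) =
  ka k i (L i - kk) * xder rx (2 * kk).+1 s0 (mono (U i (L i - kk) :: nseq kk (Y i))).
Proof.
move=> hk; set j := (L i - kk)%N.
have hj : (1 <= j <= L i)%N by rewrite /j; lia.
have hj1 : (j.-1 <= L i)%N by lia.
have hj2 : (j <= L i)%N by lia.
have -> : (L i - kk.+1 = j.-1)%N by rewrite /j; lia.
have hv := pvA (k := k).
rewrite xderS net_reduce; last by rewrite okxsE /= map_nseq labS // labY all_nseq /= orbT /= !inE !mem_nseq /= !andbF.
rewrite (sumj1 (j0 := j)) //; last first.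
  move=> j' hj' hne; rewrite six_eval.
  have hj1' : (j'.-1 <= L i)%N by lia.
  have hj2' : (j' <= L i)%N by lia.
  rewrite lemU ?lemV ?lemA ?lemAt //; labc.
  have -> : (j'.-1 == j.-1) = false by apply/eqP; lia.
  by rewrite !addr0.
rewrite six_eval lemU ?lemV ?lemA ?lemAt //; labc; rewrite ?eqxx ?addr0 ?add0r.
have hle : lem (mono [:: Y i; S i j.-1]) (mono [:: S i j.-1, Y i & nseq kk (Y i)]).
  by rewrite -cplx2E lemA //; labc; rewrite eqxx.
rewrite !rt_bind // -[totder rx (xder rx (2 * kk) s0)]/(xder rx (2 * kk).+1 s0).
rewrite (Xz hv hle (s := Y i)); last by phic.
rewrite (Xz hv hle (s := S i j.-1)); last by phic.
have hp : perm_eq [:: S i j.-1, Y i & nseq kk (Y i)] ([:: Y i; S i j.-1] ++ nseq kk (Y i)).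
  by apply/permP => a /=; rewrite addnCA.
rewrite (@Xv _ _ _ _ (nseq kk (Y i)) (U i j) _ hp).
have hne : (Y i == U i j) = false by rewrite eq_sym; exact: negbTE (int_ne (U_int hj) (Y_ni i)).
rewrite count_nseq /= hne mul0n.
by rewrite !(add0r, addr0, subr0, mulr0, mul1r).
Qed.

Lemma xder0 : xder rx 0 s0 (mono [:: s0]) = 1.
Proof.
rewrite /xder /= /pvar; case: forallP => // h; exfalso; apply: h => t.
by rewrite /mono /= addn0 (eq_sym s0).
Qed.

Lemma labs_S (ids : seq nat) : all (fun x => x <= L i)%N ids ->
  map lab (map (S i) ids) = map (fun x => (3, x)%N) ids.
Proof. by elim: ids => [|x ids IH] //= /andP [hx h]; rewrite labS // IH. Qed.

Lemma mem3 c y (ids : seq nat) : c != 3%N -> (c, y) \in map (fun x => (3, x)%N) ids = false.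
Proof. by move=> hc; apply/negbTE/mapP => [[x _ [e _]]]; move: hc; rewrite e. Qed.

Lemma xder_S0 l (ids : seq nat) : all (fun x => x <= L i)%N ids ->
  xder rx l.+1 s0 (mono (map (S i) ids)) = 0.
Proof.
move=> h; rewrite xderS net_reduce; last first.
  rewrite okxsE labs_S // (mem3 (c:=1%N)) //= andbT all_map.
  by apply/allP => x _.
apply: sumj0 => j hj; rewrite six_eval.
have hj1 : (j.-1 <= L i)%N by lia.
have hj2 : (j <= L i)%N by lia.
by rewrite lemU ?lemV ?lemA ?lemAt // labs_S // !(mem3 (c:=1%N)) // !(mem3 (c:=2%N)) // !(mem3 (c:=4%N)) // !(mem3 (c:=5%N)) //= !addr0.
Qed.

Lemma lem2_single (a b x : T) : a != b -> lem (cplx2 a b) (mono [:: x]) = false.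
Proof.
move=> hab; rewrite lem2 // !inE; apply/negbTE/negP => /andP [/eqP e1 /eqP e2].
by subst; rewrite eqxx in hab.
Qed.

Lemma xder_single l x : lab x != (0, 0)%N -> lab x != (4, 0)%N -> is_nonint L Y Yt S x ->
  xder rx l.+1 s0 (mono [:: x]) = 0.
Proof.
move=> h0 _ hx; rewrite xderS net_reduce; last first.
  rewrite /okxs /= h0 /= !inE; apply/negP => /andP [/eqP e1 /eqP e2].
  by move: (Y_Yt i); rewrite e1 e2 eqxx.
apply: sumj0 => j hj; rewrite six_eval.
have hj1 : (j.-1 <= L i)%N by lia.
have hj2 : (j <= L i)%N by lia.
rewrite !lem2_single ?Y_S_ne ?Yt_S_ne // !lem1 !inE.
have -> : (U i j == x) = false by apply/negbTE/int_ne => //; exact: U_int.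
have -> : (V i j == x) = false by apply/negbTE/int_ne => //; exact: V_int.
by rewrite !addr0.
Qed.

Lemma T1 : xder rx 1 s0 (mono [:: U i (L i)]) = kc k i (L i).
Proof.
have := desc_F (kk := 0) L_pos; rewrite !subn0 => ->.
by rewrite xder0 mulr1.
Qed.

Lemma T2 : xder rx 1 s0 (mono [:: V i (L i)]) = kbt k i (L i).
Proof.
have := desc_H (kk := 0) L_pos; rewrite !subn0 => ->.
by rewrite xder0 mulr1.
Qed.

Lemma T4 : xder rx 2 s0 (mono [:: U i (L i)]) = - (kc k i (L i) * (kb k i (L i) + kc k i (L i))).
Proof.
have hj : (1 <= L i <= L i)%N by rewrite L_pos leqnn.
have hj1 : ((L i).-1 <= L i)%N by exact: leq_pred.
rewrite xderS net_reduce; last by rewrite okxsE /= labU.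
rewrite (sumj1 (j0 := L i)) //; last first.
  move=> j' hj' hne; rewrite six_eval.
  have hj1' : (j'.-1 <= L i)%N by lia.
  have hj2' : (j' <= L i)%N by lia.
  by rewrite lemU ?lemV ?lemA ?lemAt //; labc; rewrite (negbTE hne) !addr0.
rewrite six_eval lemU ?lemV ?lemA ?lemAt //; labc; rewrite ?eqxx ?addr0 ?add0r.
have hle : lem (mono [:: U i (L i)]) (mono [:: U i (L i)]) by apply/forallP => t.
rewrite !rt_unb //.
rewrite !(@Xv _ _ [:: U i (L i)] [:: U i (L i)] [::] _ _ (perm_refl _)) /=.
rewrite -[totder rx (pvar R s0)]/(xder rx 1 s0) T1.
rewrite !xder_single ?labY ?labS ?labU //; try exact: Y_ni; try exact: S_ni.
by rewrite !(add0r, addr0, mul1r); ring.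
Qed.

Lemma T5 : xder rx 2 s0 (mono [:: V i (L i)]) = - (kbt k i (L i) * (kbt k i (L i) + kct k i (L i))).
Proof.
have hj : (1 <= L i <= L i)%N by rewrite L_pos leqnn.
have hj1 : ((L i).-1 <= L i)%N by exact: leq_pred.
rewrite xderS net_reduce; last by rewrite okxsE /= labV.
rewrite (sumj1 (j0 := L i)) //; last first.
  move=> j' hj' hne; rewrite six_eval.
  have hj1' : (j'.-1 <= L i)%N by lia.
  have hj2' : (j' <= L i)%N by lia.
  by rewrite lemU ?lemV ?lemA ?lemAt //; labc; rewrite (negbTE hne) !addr0.
rewrite six_eval lemU ?lemV ?lemA ?lemAt //; labc; rewrite ?eqxx ?addr0 ?add0r.
have hle : lem (mono [:: V i (L i)]) (mono [:: V i (L i)]) by apply/forallP => t.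
rewrite !rt_unb //.
rewrite !(@Xv _ _ [:: V i (L i)] [:: V i (L i)] [::] _ _ (perm_refl _)) /=.
rewrite -[totder rx (pvar R s0)]/(xder rx 1 s0) T2.
rewrite !xder_single ?labYt ?labS ?labV //; try exact: Yt_ni; try exact: S_ni.
by rewrite !(add0r, addr0, mul1r); ring.
Qed.

Lemma T3 : xder rx 1 s0 (mono [:: Yt i; S i (L i)]) = - kat k i (L i).
Proof.
have hj : (1 <= L i <= L i)%N by rewrite L_pos leqnn.
have hj1 : ((L i).-1 <= L i)%N by exact: leq_pred.
have hv := pvT (k := k).
rewrite xderS net_reduce; last by rewrite okxsE /= labYt labS.
rewrite (sumj1 (j0 := L i)) //; last first.
  move=> j' hj' hne; rewrite six_eval.
  have hj1' : (j'.-1 <= L i)%N by lia.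
  have hj2' : (j' <= L i)%N by lia.
  by rewrite lemU ?lemV ?lemA ?lemAt //; labc; rewrite (negbTE hne) !addr0.
rewrite six_eval lemU ?lemV ?lemA ?lemAt //; labc; rewrite ?eqxx ?addr0 ?add0r.
have hle : lem (mono [:: Yt i; S i (L i)]) (mono [:: Yt i; S i (L i)]) by apply/forallP => t.
rewrite !rt_bind // -[pvar R s0]/(xder rx 0 s0).
rewrite (Xz hv hle (s := Yt i)); last by phic.
rewrite (Xz hv hle (s := V i (L i))); last by phic.
rewrite (@Xv _ _ _ _ [::] (S i (L i)) _ (perm_refl _)) xder0 /=.
by rewrite !(add0r, addr0, subr0, mulr0, mul1r, sub0r) mulrN1.
Qed.

Lemma TA j : (1 <= j < L i)%N ->
  xder rx 2 s0 (mono [:: Yt i; S i (L i); S i j]) = kat k i (L i) * kat k i j.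
Proof.
move=> hj0.
have hj : (1 <= j <= L i)%N by lia.
have hL : (1 <= L i <= L i)%N by rewrite L_pos leqnn.
have hjL : (j <= L i)%N by lia.
have hv := pvT (k := k).
rewrite xderS net_reduce; last by rewrite okxsE /= labYt !labS //= !inE xpair_eqE /=; lia.
have hne : L i != j by lia.
rewrite (sumj2 (j0 := L i) (j1 := j)) //; last first.
  move=> j' hj' hne1 hne2; rewrite six_eval.
  have hj1' : (j'.-1 <= L i)%N by lia.
  have hj2' : (j' <= L i)%N by lia.
  by rewrite lemU ?lemV ?lemA ?lemAt //; labc; rewrite (negbTE hne1) (negbTE hne2) !addr0.
rewrite !six_eval !lemU ?lemV ?lemA ?lemAt //; labc; rewrite ?eqxx ?orbT ?addr0 ?add0r.
have hle1 : lem (mono [:: Yt i; S i (L i)]) (mono [:: Yt i; S i (L i); S i j]).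
  by rewrite -cplx2E lemAt //; labc; rewrite eqxx.
have hle2 : lem (mono [:: Yt i; S i j]) (mono [:: Yt i; S i (L i); S i j]).
  by rewrite -cplx2E lemAt //; labc; rewrite eqxx orbT.
rewrite !rt_bind // -[totder rx (pvar R s0)]/(xder rx 1 s0).
rewrite (Xz hv hle1 (s := Yt i)); last by phic.
rewrite (Xz hv hle1 (s := V i (L i))); last by phic.
rewrite (Xz hv hle2 (s := V i j)); last by phic.
rewrite (@Xv _ _ _ _ [:: S i j] (S i (L i)) _ (perm_refl _)).
rewrite -[mono [:: S i (L i); S i j]]/(mono (map (S i) [:: L i; j])) xder_S0; last by rewrite /= hjL leqnn.
have hp : perm_eq [:: Yt i; S i (L i); S i j] ([:: Yt i; S i j] ++ [:: S i (L i)]).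
  by apply/permP => a /=; lia.
rewrite (@Xv _ _ _ _ [:: S i (L i)] (Yt i) _ hp) (@Xv _ _ _ _ [:: S i (L i)] (S i j) _ hp).
rewrite T3.
rewrite -[mono [:: S i j; S i (L i)]]/(mono (map (S i) [:: j; L i])) xder_S0; last by rewrite /= hjL leqnn.
have hneq : (S i (L i) == Yt i) = false by apply/negbTE/eqP => e; apply: (Yt_S (leqnn (L i))); rewrite e.
rewrite /= hneq /=; ring.
Qed.

Lemma TC j : (1 <= j < L i)%N ->
  xder rx 2 s0 (mono [:: V i j; S i (L i)]) = - ((kbt k i j + kct k i j) * kat k i (L i)).
Proof.
move=> hj0.
have hj : (1 <= j <= L i)%N by lia.
have hjL : (j <= L i)%N by lia.
have hj1 : (j.-1 <= L i)%N by lia.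
have hv := pvT (k := k).
rewrite xderS net_reduce; last by rewrite okxsE /= labV // labS.
rewrite (sumj1 (j0 := j)) //; last first.
  move=> j' hj' hne; rewrite six_eval.
  have hj1' : (j'.-1 <= L i)%N by lia.
  have hj2' : (j' <= L i)%N by lia.
  by rewrite lemU ?lemV ?lemA ?lemAt //; labc; rewrite (negbTE hne) !addr0.
rewrite six_eval lemU ?lemV ?lemA ?lemAt //; labc; rewrite ?eqxx ?addr0 ?add0r.
have hle : lem (mono [:: V i j]) (mono [:: V i j; S i (L i)]) by rewrite -cplx1E lemV //; labc.
rewrite !rt_unb // -[totder rx (pvar R s0)]/(xder rx 1 s0).
rewrite (Xz hv hle (s := V i j)); last by phic.
rewrite !(@Xv _ _ _ _ [:: S i (L i)] _ _ (perm_refl _)).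
rewrite T3.
rewrite -[mono [:: S i j; S i (L i)]]/(mono (map (S i) [:: j; L i])) xder_S0; last by rewrite /= hjL leqnn.
rewrite -[mono [:: S i j.-1; S i (L i)]]/(mono (map (S i) [:: j.-1; L i])) xder_S0; last by rewrite /= hj1 leqnn.
have hneq : (S i (L i) == Yt i) = false by apply/negbTE/eqP => e; apply: (Yt_S (leqnn (L i))); rewrite e.
rewrite /= hneq /=; ring.
Qed.

Lemma TB j : (1 <= j < L i)%N ->
  xder rx 3 s0 (mono [:: U i j; S i (L i).-1]) =
  (kb k i j + kc k i j) * xder rx 2 s0 (mono [:: S i (L i).-1; Y i]).
Proof.
move=> hj0.
have hj : (1 <= j <= L i)%N by lia.
have hjL : (j <= L i)%N by lia.
have hj1 : (j.-1 <= L i)%N by lia.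
have hL1 : ((L i).-1 <= L i)%N by lia.
have hv := pvB (k := k).
rewrite xderS net_reduce; last by rewrite okxsE /= labU // labS.
rewrite (sumj1 (j0 := j)) //; last first.
  move=> j' hj' hne; rewrite six_eval.
  have hj1' : (j'.-1 <= L i)%N by lia.
  have hj2' : (j' <= L i)%N by lia.
  by rewrite lemU ?lemV ?lemA ?lemAt //; labc; rewrite (negbTE hne) !addr0.
rewrite six_eval lemU ?lemV ?lemA ?lemAt //; labc; rewrite ?eqxx ?addr0 ?add0r.
have hle : lem (mono [:: U i j]) (mono [:: U i j; S i (L i).-1]) by rewrite -cplx1E lemU //; labc.
rewrite !rt_unb // -[totder rx (totder rx (pvar R s0))]/(xder rx 2 s0).
rewrite (Xz hv hle (s := U i j)); last by phic.
rewrite !(@Xv _ _ _ _ [:: S i (L i).-1] _ _ (perm_refl _)).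
rewrite -[mono [:: S i j; S i (L i).-1]]/(mono (map (S i) [:: j; (L i).-1])) xder_S0; last by rewrite /= hjL hL1.
rewrite -[mono [:: S i j.-1; S i (L i).-1]]/(mono (map (S i) [:: j.-1; (L i).-1])) xder_S0; last by rewrite /= hj1 hL1.
rewrite (@mono_perm _ [:: Y i; S i (L i).-1] [:: S i (L i).-1; Y i]); last by apply/permP => a /=; lia.
have hneq : (S i (L i).-1 == Y i) = false by apply/negbTE/eqP => e; apply: (Y_S hL1); rewrite e.
rewrite /= hneq /=; ring.
Qed.

Lemma Z0 : (2 <= L i)%N -> xder rx 2 s0 (mono [:: U i (L i); S i 0]) = 0.
Proof.
move=> hL2.
have hj : (1 <= L i <= L i)%N by rewrite L_pos leqnn.
have hL1 : ((L i).-1 <= L i)%N by lia.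
have hv := pv1 (k := k) hL2.
rewrite xderS net_reduce; last by rewrite okxsE /= labU // labS.
rewrite (sumj1 (j0 := L i)) //; last first.
  move=> j' hj' hne; rewrite six_eval.
  have hj1' : (j'.-1 <= L i)%N by lia.
  have hj2' : (j' <= L i)%N by lia.
  by rewrite lemU ?lemV ?lemA ?lemAt //; labc; rewrite (negbTE hne) !addr0.
rewrite six_eval lemU ?lemV ?lemA ?lemAt //; labc; rewrite ?eqxx ?addr0 ?add0r.
have hle : lem (mono [:: U i (L i)]) (mono [:: U i (L i); S i 0]) by rewrite -cplx1E lemU //; labc.
rewrite !rt_unb // -[totder rx (pvar R s0)]/(xder rx 1 s0).
rewrite (Xz hv hle (s := U i (L i))); last by phic.
rewrite (Xz hv hle (s := Y i)); last by phic.
rewrite (Xz hv hle (s := S i (L i).-1)); last by phic.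
rewrite !(@Xv _ _ _ _ [:: S i 0] _ _ (perm_refl _)).
rewrite -[mono [:: S i (L i); S i 0]]/(mono (map (S i) [:: L i; 0%N])) xder_S0; last by rewrite /= leqnn.
by rewrite !(mulr0, addr0, add0r, subr0).
Qed.

Lemma TA1 : (2 <= L i)%N ->
  xder rx 3 s0 (mono [:: Y i; S i (L i).-1; S i 0]) =
  - (ka k i 1 * xder rx 2 s0 (mono [:: S i (L i).-1; Y i])).
Proof.
move=> hL2.
have hj : (1 <= L i <= L i)%N by rewrite L_pos leqnn.
have h1 : (1 <= 1 <= L i)%N by lia.
have hL1 : ((L i).-1 <= L i)%N by lia.
have hv := pv1 (k := k) hL2.
have hne : L i != 1%N by lia.
rewrite xderS net_reduce; last by rewrite okxsE /= labY !labS //= !inE /=.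
rewrite (sumj2 (j0 := L i) (j1 := 1%N)) //; last first.
  move=> j' hj' hne1 hne2; rewrite six_eval.
  have hj1' : (j'.-1 <= L i)%N by lia.
  have hj2' : (j' <= L i)%N by lia.
  rewrite lemU ?lemV ?lemA ?lemAt //; labc.
  have -> : (j'.-1 == (L i).-1) = false by apply/negbTE; lia.
  have -> : (j'.-1 == 0%N) = false by apply/negbTE; lia.
  by rewrite !addr0.
rewrite !six_eval !lemU ?lemV ?lemA ?lemAt //; labc; rewrite ?eqxx ?orbT ?addr0 ?add0r.
have hle1 : lem (mono [:: Y i; S i (L i).-1]) (mono [:: Y i; S i (L i).-1; S i 0]).
  by rewrite -cplx2E lemA //; labc; rewrite eqxx.
have hle2 : lem (mono [:: Y i; S i 0]) (mono [:: Y i; S i (L i).-1; S i 0]).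
  by rewrite -[mono [:: Y i; S i 0]]/(mono [:: Y i; S i (1%N).-1]) -cplx2E lemA //; labc; rewrite eqxx orbT.
rewrite !rt_bind // -[totder rx (totder rx (pvar R s0))]/(xder rx 2 s0).
rewrite (Xz hv hle1 (s := Y i)); last by phic.
rewrite (Xz hv hle1 (s := S i (L i).-1)); last by phic.
rewrite (Xz hv hle2 (s := U i 1)); last by phic.
rewrite (Xz hv hle2 (s := S i 0)); last by phic.
rewrite (@Xv _ _ _ _ [:: S i 0] (U i (L i)) _ (perm_refl _)) Z0 //.
have hp : perm_eq [:: Y i; S i (L i).-1; S i 0] ([:: Y i; S i 0] ++ [:: S i (L i).-1]).
  by apply/permP => a /=; lia.
rewrite (@Xv _ _ _ _ [:: S i (L i).-1] (Y i) _ hp).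
rewrite (@mono_perm _ [:: Y i; S i (L i).-1] [:: S i (L i).-1; Y i]); last by apply/permP => a /=; lia.
have hneq : (S i (L i).-1 == Y i) = false by apply/negbTE/eqP => e; apply: (Y_S hL1); rewrite e.
rewrite /= hneq /=; ring.
Qed.

End Targets.

End Chain.
End Net.

Section Ident.
Variables (R : realFieldType) (T : finType) (N : nat) (L : 'I_N -> nat)
  (Y Yt : 'I_N -> T) (S U V : 'I_N -> nat -> T).
Hypothesis hH1 : H1 L Y Yt S U V.
Hypothesis hH2 : H2 L Y Yt S U V.
Variable i : 'I_N.

Lemma cancr (a b x y : R) : x = y -> 0 < x -> a * x = b * y -> a = b.
Proof. by move=> -> hy e; apply: (mulIf (lt0r_neq0 hy)). Qed.
Lemma cancl (a b x y : R) : x = y -> 0 < x -> x * a = y * b -> a = b.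
Proof. move=> e h; rewrite mulrC (mulrC y); exact: cancr. Qed.

Lemma ord1 (n : nat) : (1 <= 1 <= maxn 2 (2 * n - 1))%N. Proof. lia. Qed.
Lemma ord2 (n : nat) : (1 <= 2 <= maxn 2 (2 * n - 1))%N. Proof. lia. Qed.
Lemma ord3 (n : nat) : (2 <= n)%N -> (1 <= 3 <= maxn 2 (2 * n - 1))%N. Proof. lia. Qed.
Lemma ordF (n j : nat) : (1 <= j <= n)%N -> (1 <= (2 * (n - j)).+1 <= maxn 2 (2 * n - 1))%N.
Proof. lia. Qed.
Lemma ordG (n j : nat) : (1 <= j <= n)%N -> (2 <= j)%N || (n == 1%N) ->
  (1 <= (2 * (n - j)).+2 <= maxn 2 (2 * n - 1))%N.
Proof. move=> h /orP [h2|/eqP h2]; lia. Qed.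
Lemma ar_lt (n j : nat) : (1 <= j <= n)%N -> j != n -> (1 <= j < n)%N. Proof. lia. Qed.
Lemma ar_L2 (n j : nat) : (1 <= j <= n)%N -> j != n -> (2 <= n)%N. Proof. lia. Qed.
Lemma ar_j1 (n j : nat) : (1 <= j <= n)%N -> ~~ ((2 <= j)%N || (n == 1%N)) -> j = 1%N /\ (2 <= n)%N.
Proof. rewrite negb_or; lia. Qed.
Lemma ar_kk (n j : nat) : (1 <= j <= n)%N -> (n - j < n)%N /\ (n - (n - j) = j)%N. Proof. lia. Qed.

Lemma ident (k1 k2 : rates N R) : pos_rates L k1 -> pos_rates L k2 ->
  (forall l, (1 <= l <= maxn 2 (2 * L i - 1))%N -> forall m,
     xder (network L Y Yt S U V k1) l (S i (L i)) m =
     xder (network L Y Yt S U V k2) l (S i (L i)) m) ->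
  forall j, (1 <= j <= L i)%N ->
    [/\ ka k1 i j = ka k2 i j, kb k1 i j = kb k2 i j & kc k1 i j = kc k2 i j] /\
    [/\ kat k1 i j = kat k2 i j, kbt k1 i j = kbt k2 i j & kct k1 i j = kct k2 i j].
Proof.
move=> p1 p2 he.
have hL0 : (0 < L i)%N by case: hH1.
pose G (kk0 : rates N R) kk := xder (network L Y Yt S U V kk0) (2 * kk) (S i (L i))
   (mono (S i (L i - kk) :: nseq kk (Y i))).
have HG : forall kk, (kk < L i)%N -> G k1 kk = G k2 kk /\ 0 < G k1 kk.
  elim=> [|kk IH] hk.
    by rewrite /G !subn0 !(xder0 L Y Yt S U V) ltr01.
  have [e pos] := IH (ltnW hk).
  rewrite /G in e pos *.
  have -> : (2 * kk.+1 = (2 * kk).+2)%N by lia.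
  split; first by apply: he; lia.
  rewrite (desc_G hH1 hH2 k1) ?(desc_F hH1 hH2 k1); try lia.
  have hj : (1 <= L i - kk <= L i)%N by lia.
  have [[a1 b1 c1] _] := p1 i _ hj.
  by rewrite !mulr_gt0.
have hord : forall l, (1 <= l <= maxn 2 (2 * L i - 1))%N -> forall xs,
    xder (network L Y Yt S U V k1) l (S i (L i)) (mono xs) =
    xder (network L Y Yt S U V k2) l (S i (L i)) (mono xs).
  by move=> l hl xs; apply: he.
have eG1 : forall kk0, xder (network L Y Yt S U V kk0) 2 (S i (L i)) (mono [:: S i (L i).-1; Y i])
   = G kk0 1%N by move=> kk0; rewrite /G subn1.
have hLL : (1 <= L i <= L i)%N by rewrite hL0 leqnn.
have [[_ _ cL1] [atL1 btL1 _]] := p1 i _ hLL.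
have eatL : kat k1 i (L i) = kat k2 i (L i).
  have h := hord _ (ord1 _) [:: Yt i; S i (L i)].
  rewrite (T3 hH1 hH2 i k1) (T3 hH1 hH2 i k2) in h.
  exact: oppr_inj.
move=> j hj.
set kk := (L i - j)%N.
have [hkk ej] := ar_kk hj.
have [eG posG] := HG kk hkk.
rewrite /G ej in eG posG.
have [[a1 b1 c1] [at1 bt1 ct1]] := p1 i _ hj.
have ec : kc k1 i j = kc k2 i j.
  have h := hord _ (ordF hj) (U i (L i - kk) :: nseq kk (Y i)).
  rewrite (desc_F hH1 hH2 k1 hkk) (desc_F hH1 hH2 k2 hkk) ej in h.
  exact: (cancr eG posG h).
have ebt : kbt k1 i j = kbt k2 i j.
  have h := hord _ (ordF hj) (V i (L i - kk) :: nseq kk (Y i)).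
  rewrite (desc_H hH1 hH2 k1 hkk) (desc_H hH1 hH2 k2 hkk) ej in h.
  exact: (cancr eG posG h).
have ea : ka k1 i j = ka k2 i j.
  case: (boolP ((2 <= j)%N || (L i == 1%N))) => hc.
    have h := hord _ (ordG hj hc) (S i (L i - kk.+1) :: nseq kk.+1 (Y i)).
    rewrite (desc_G hH1 hH2 k1 hkk) (desc_G hH1 hH2 k2 hkk) in h.
    rewrite (desc_F hH1 hH2 k1 hkk) (desc_F hH1 hH2 k2 hkk) ej in h.
    by apply: (cancr _ _ h); [rewrite ec eG|rewrite mulr_gt0].
  have [ej1 hL2] := ar_j1 hj hc.
  have [eG1' posG1] := HG 1%N (hL2 : (1 < L i)%N).
  have h := hord _ (ord3 hL2) [:: Y i; S i (L i).-1; S i 0].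
  rewrite (TA1 hH1 hH2 k1 hL2) (TA1 hH1 hH2 k2 hL2) !eG1 in h.
  rewrite ej1; exact: (cancr eG1' posG1 (oppr_inj h)).
have eb : kb k1 i j = kb k2 i j.
  case: (eqVneq j (L i)) => [ejL|hjL].
    have h := hord _ (ord2 _) [:: U i (L i)].
    rewrite (T4 hH1 hH2 i k1) (T4 hH1 hH2 i k2) in h.
    rewrite ejL in ec c1 *.
    have := cancl ec c1 (oppr_inj h); rewrite ec; exact: addIr.
  have hjL' := ar_lt hj hjL; have hL2 := ar_L2 hj hjL.
  have [eG1' posG1] := HG 1%N (hL2 : (1 < L i)%N).
  have h := hord _ (ord3 hL2) [:: U i j; S i (L i).-1].
  rewrite (TB hH1 hH2 k1 hjL') (TB hH1 hH2 k2 hjL') !eG1 in h.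
  have := cancr eG1' posG1 h; rewrite ec; exact: addIr.
have eat : kat k1 i j = kat k2 i j.
  case: (eqVneq j (L i)) => [->|hjL] //.
  have hjL' := ar_lt hj hjL.
  have h := hord _ (ord2 _) [:: Yt i; S i (L i); S i j].
  rewrite (TA hH1 hH2 k1 hjL') (TA hH1 hH2 k2 hjL') in h.
  exact: (cancl eatL atL1 h).
have ect : kct k1 i j = kct k2 i j.
  case: (eqVneq j (L i)) => [ejL|hjL].
    have h := hord _ (ord2 _) [:: V i (L i)].
    rewrite (T5 hH1 hH2 i k1) (T5 hH1 hH2 i k2) in h.
    rewrite ejL in ebt bt1 *.
    have := cancl ebt bt1 (oppr_inj h); rewrite ebt; exact: addrI.
  have hjL' := ar_lt hj hjL.
  have h := hord _ (ord2 _) [:: V i j; S i (L i)].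
  rewrite (TC hH1 hH2 k1 hjL') (TC hH1 hH2 k2 hjL') in h.
  have := cancr eatL atL1 (oppr_inj h); rewrite ebt; exact: addrI.
by split; split.
Qed.
End Ident.

Theorem mainTheorem4 (R : realFieldType) (T : finType) (N : nat)
  (L : 'I_N -> nat) (Y Yt : 'I_N -> T) (S U V : 'I_N -> nat -> T) :
  (* every species of T occurs in the network *)
  (forall t : T, is_inter L U V t \/ is_nonint L Y Yt S t) ->
  H1 L Y Yt S U V ->
  H2 L Y Yt S U V ->
  forall k1 k2 : rates N R,
  pos_rates L k1 -> pos_rates L k2 ->
  (forall (i : 'I_N) (l : nat), (1 <= l <= maxn 2 (2 * L i - 1))%N ->
     forall m : T -> nat,
       xder (network L Y Yt S U V k1) l (S i (L i)) m =
       xder (network L Y Yt S U V k2) l (S i (L i)) m) ->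
  eq_rates L k1 k2.
Proof.
move=> _ hH1 hH2 k1 k2 p1 p2 he i j hj.
exact: (ident hH1 hH2 p1 p2 (he i) hj).
Qed.
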